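(* An affine theory $T$ is inductive (the union of every chain of models of $T$ is a model of $T$) if and only if it is a $\forall\exists$-theory, i.e. it can be axiomatized by conditions of the form $0\le\inf_{\bar x}\sup_{\bar y}\phi(\bar x,\bar y)$ with $\phi$ quantifier-free.
   Context: Setting: affine continuous logic over a Lipschitz language $L$; structures are metric spaces of diameter $\le1$ with Lipschitz interpretations; affine formulas are built from atomic formulas $1$, $d(t_1,t_2)$, $R(\bar t)$ by $+$, multiplication by real scalars, $\sup_x$, $\inf_x$; quantifier-free formulas are real linear combinations of atomic formulas. A theory is a set of closed conditions $\sigma\le\eta$ between sentences. A chain of models $M_0\subseteq M_1\subseteq\cdots$ is a chain under substructure inclusion; its union carries the obvious structure. *)

(* Defs.v *)
From HB Require Import structures.
From mathcomp Require Import all_boot all_order all_algebra.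
From mathcomp Require Import classical_sets reals.
Set Implicit Arguments. Unset Strict Implicit. Unset Printing Implicit Defensive.
Import Order.TTheory GRing.Theory Num.Theory.
Local Open Scope ring_scope.
Local Open Scope classical_set_scope.

Section Affine.
Variable R : realType.

Record Lang := {
  Fsym : Type; farity : Fsym -> nat; fLip : Fsym -> R;
  fLip_ge0 : forall f, 0 <= fLip f;
  Rsym : Type; rarity : Rsym -> nat; rLip : Rsym -> R;
  rLip_ge0 : forall r, 0 <= rLip r }.

Variable L : Lang.

Record Struc := {
  carrier :> Type;
  st_dist : carrier -> carrier -> R;
  st_inh : inhabited carrier;
  dist_refl : forall x, st_dist x x = 0;
  dist_sep : forall x y, st_dist x y = 0 -> x = y;
  dist_sym : forall x y, st_dist x y = st_dist y x;
  dist_tri : forall x y z, st_dist x z <= st_dist x y + st_dist y z;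
  dist_le1 : forall x y, st_dist x y <= 1;
  funI : forall f : Fsym L, ('I_(farity f) -> carrier) -> carrier;
  relI : forall r : Rsym L, ('I_(rarity r) -> carrier) -> R;
  funI_lip : forall f a b, st_dist (funI a) (funI b)
      <= fLip f * \sum_(i < farity f) st_dist (a i) (b i);
  relI_lip : forall r a b, `|relI a - relI b|
      <= rLip r * \sum_(i < rarity r) st_dist (a i) (b i) }.

Inductive term :=
  | Var : nat -> term
  | App : forall f : Fsym L, ('I_(farity f) -> term) -> term.

Inductive formula :=
  | One : formula
  | Dist : term -> term -> formula
  | Rel : forall r : Rsym L, ('I_(rarity r) -> term) -> formula
  | Add : formula -> formula -> formula
  | Scale : R -> formula -> formula
  | Sup : nat -> formula -> formula
  | Inf : nat -> formula -> formula.

Fixpoint tfree (x : nat) (t : term) : Prop :=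
  match t with
  | Var n => n = x
  | App f args => exists i, tfree x (args i)
  end.

Fixpoint ffree (x : nat) (phi : formula) : Prop :=
  match phi with
  | One => False
  | Dist t1 t2 => tfree x t1 \/ tfree x t2
  | Rel r args => exists i, tfree x (args i)
  | Add p q => ffree x p \/ ffree x q
  | Scale _ p => ffree x p
  | Sup y p => y <> x /\ ffree x p
  | Inf y p => y <> x /\ ffree x p
  end.

Definition sentence (phi : formula) : Prop := forall x, ~ ffree x phi.

Fixpoint qfree (phi : formula) : Prop :=
  match phi with
  | One | Dist _ _ | Rel _ _ => True
  | Add p q => qfree p /\ qfree q
  | Scale _ p => qfree p
  | Sup _ _ | Inf _ _ => False
  end.

Definition upd (M : Struc) (v : nat -> M) (x : nat) (a : M) : nat -> M :=
  fun n => if n == x then a else v n.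

Fixpoint tval (M : Struc) (v : nat -> M) (t : term) : M :=
  match t with
  | Var n => v n
  | App f args => funI (fun i => tval v (args i))
  end.

Fixpoint fval (M : Struc) (v : nat -> M) (phi : formula) : R :=
  match phi with
  | One => 1
  | Dist t1 t2 => st_dist (tval v t1) (tval v t2)
  | Rel r args => relI (fun i => tval v (args i))
  | Add p q => fval v p + fval v q
  | Scale c p => c * fval v p
  | Sup x p => sup (range (fun a : M => fval (upd v x a) p))
  | Inf x p => inf (range (fun a : M => fval (upd v x a) p))
  end.

(** Conditions sigma <= eta; theories are sets of closed conditions. *)
Definition condition := (formula * formula)%type.
Definition theory := set condition.

Definition closed_theory (T : theory) : Prop :=
  forall c, T c -> sentence c.1 /\ sentence c.2.

Definition models (M : Struc) (T : theory) : Prop :=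
  forall c, T c -> forall v : nat -> M, fval v c.1 <= fval v c.2.

(** Substructure inclusion (up to identification): an embedding. *)
Definition embedding (M N : Struc) (e : M -> N) : Prop :=
  [/\ forall x y, st_dist (e x) (e y) = st_dist x y,
      forall f a, e (funI a) = @funI N f (fun i => e (a i)) &
      forall r a, @relI N r (fun i => e (a i)) = relI a].

Definition is_union (Ms : nat -> Struc) (es : forall n, Ms n -> Ms n.+1)
    (N : Struc) (gs : forall n, Ms n -> N) : Prop :=
  [/\ forall n, embedding (gs n),
      forall n x, gs n.+1 (es n x) = gs n x &
      forall y : N, exists n (x : Ms n), gs n x = y].

Definition inductive (T : theory) : Prop :=
  forall (Ms : nat -> Struc) (es : forall n, Ms n -> Ms n.+1),
    (forall n, embedding (es n)) ->
    (forall n, models (Ms n) T) ->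
    forall (N : Struc) (gs : forall n, Ms n -> N),
      is_union es gs -> models N T.

Definition zero_f : formula := Scale 0 One.

Definition AE_condition (c : condition) : Prop :=
  sentence c.2 /\ c.1 = zero_f /\
  exists (xs ys : seq nat) (phi : formula),
    qfree phi /\ c.2 = foldr Inf (foldr Sup phi ys) xs.

Definition AE_theory (T : theory) : Prop :=
  exists T' : theory, (forall c, T' c -> AE_condition c) /\
    forall M : Struc, models M T <-> models M T'.

End Affine.

(* Main.v *)
From HB Require Import structures.
From Stdlib Require Cantor.
From mathcomp Require Import all_boot all_order all_algebra.
From mathcomp Require Import classical_sets reals boolp filter.
From mathcomp Require Import ring lra zify.
Require Import Defs.
Set Implicit Arguments. Unset Strict Implicit. Unset Printing Implicit Defensive.
Import Order.TTheory GRing.Theory Num.Theory.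
Local Open Scope ring_scope.
Local Open Scope classical_set_scope.

Section Reals.
Variable R : realType.

Lemma sup_range_ub (T : Type) (f : T -> R) B :
  (forall x, f x <= B) -> forall x, f x <= sup (range f).
Proof.
move=> hB x; apply: sup_upper_bound; last by exists x.
split; first by exists (f x), x.
by exists B => _ [y _ <-].
Qed.

Lemma sup_range_le (T : Type) (f : T -> R) B :
  inhabited T -> (forall x, f x <= B) -> sup (range f) <= B.
Proof.
case=> x0 hB; apply: ge_sup; first by exists (f x0), x0.
by move=> _ [y _ <-].
Qed.

Lemma sup_range_adh (T : Type) (f : T -> R) B :
  inhabited T -> (forall x, f x <= B) -> forall eps, 0 < eps ->
  exists x, sup (range f) - eps < f x.
Proof.
case=> x0 hB eps he.
have hs : has_sup (range f).
  split; first by exists (f x0), x0.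
  by exists B => _ [y _ <-].
have [_ [x _ <-] h] := sup_adherent he hs.
by exists x.
Qed.

Lemma sup_range_eq (T : Type) (f : T -> R) r :
  (forall x, f x <= r) -> (forall eps, 0 < eps -> exists x, r - eps < f x) ->
  sup (range f) = r.
Proof.
move=> hub hadh.
have [x0 _] := hadh 1 ltr01.
have hT : inhabited T by constructor.
apply/le_anti/andP; split; first exact: sup_range_le hT hub.
apply/ler_addgt0Pr => e he.
have [x hx] := hadh e he.
have := sup_range_ub hub x; lra.
Qed.

Lemma range_bound (T : Type) (f : T -> R) B :
  inhabited T -> (forall x, `|f x| <= B) -> `|sup (range f)| <= B.
Proof.
move=> hT hB.
have hB1 : forall x, f x <= B by move=> x; have := hB x; rewrite ler_norml => /andP[].
have hB2 : forall x, - B <= f x by move=> x; have := hB x; rewrite ler_norml => /andP[].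
rewrite ler_norml; apply/andP; split; last exact: sup_range_le hT hB1.
case: hT => x0; have := sup_range_ub hB1 x0; have := hB2 x0; lra.
Qed.

Lemma inf_range (T : Type) (f : T -> R) :
  inf (range f) = - sup (range (fun x => -1 * f x)).
Proof.
rewrite /inf; congr (- sup _).
rewrite eqEsubset; split=> y.
  by case=> _ [x _ <-] <-; exists x => //; rewrite mulN1r.
by case=> x _ <-; exists (f x); [exists x|rewrite mulN1r].
Qed.

End Reals.

Section Basics.
Variable R : realType.
Variable L : Lang R.

Implicit Types (M N K : Struc L).

Lemma dist_ge0 M (x y : M) : 0 <= st_dist x y.
Proof.
have h := dist_tri x y x; rewrite dist_refl (dist_sym y x) in h; lra.
Qed.

Lemma pt_ex M : exists x : M, True.
Proof. by case: (st_inh M) => x; exists x. Qed.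

Definition pt M : M := sval (cid (pt_ex M)).

Lemma inhM M : inhabited M.
Proof. exact: st_inh. Qed.

Lemma sum_dist_le1 M n (a b : 'I_n -> M) :
  \sum_(i < n) st_dist (a i) (b i) <= n%:R.
Proof.
apply: le_trans (ler_sum _ (fun i _ => dist_le1 (a i) (b i))) _.
by rewrite sumr_const card_ord.
Qed.

Lemma relI_bnd M r : exists B, forall a : 'I_(rarity r) -> M, `|relI a| <= B.
Proof.
exists (`|relI (fun _ : 'I_(rarity r) => pt M)| + rLip r * (rarity r)%:R) => a.
have h := relI_lip a (fun _ => pt M).
have h2 := sum_dist_le1 a (fun _ => pt M).
have h3 : rLip r * \sum_(i < rarity r) st_dist (a i) (pt M) <= rLip r * (rarity r)%:R.
  by apply: ler_wpM2l => //; exact: rLip_ge0.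
have := ler_dist_dist (relI a) (relI (fun _ : 'I_(rarity r) => pt M)).
rewrite ler_norml => /andP[_ h4].
lra.
Qed.

Lemma fval_bnd M (phi : formula L) : exists B, forall v : nat -> M, `|fval v phi| <= B.
Proof.
elim: phi.
- by exists 1 => v /=; rewrite normr1.
- move=> t1 t2; exists 1 => v /=.
  by rewrite ger0_norm ?dist_ge0 ?dist_le1.
- move=> r args; have [B hB] := relI_bnd M r; exists B => v /=; exact: hB.
- move=> p [B1 h1] q [B2 h2]; exists (B1 + B2) => v /=.
  by apply: le_trans (ler_normD _ _) _; apply: lerD.
- move=> c p [B h]; exists (`|c| * B) => v /=.
  by rewrite normrM; apply: ler_wpM2l.
- move=> x p [B h]; exists B => v /=; apply: range_bound (inhM M) _ => a; exact: h.
- move=> x p [B h]; exists B => v /=; rewrite inf_range normrN.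
  apply: range_bound (inhM M) _ => a; rewrite mulN1r normrN; exact: h.
Qed.

Lemma fval_ub M (phi : formula L) : exists B, forall v : nat -> M, fval v phi <= B.
Proof.
have [B h] := fval_bnd M phi; exists B => v; have := h v.
by rewrite ler_norml => /andP[].
Qed.

Lemma fval_lb M (phi : formula L) : exists B, forall v : nat -> M, B <= fval v phi.
Proof.
have [B h] := fval_bnd M phi; exists (- B) => v; have := h v.
by rewrite ler_norml => /andP[].
Qed.

Lemma fval_Inf M (v : nat -> M) x p :
  fval v (Inf x p) = - fval v (Sup x (Scale (-1) p)).
Proof. by rewrite /= inf_range. Qed.

Lemma sup_fval_ub M (v : nat -> M) x p (a : M) :
  fval (upd v x a) p <= fval v (Sup x p).
Proof.
have [B hB] := fval_ub M p.
by apply: (sup_range_ub (f := fun a => fval (upd v x a) p)) => b; exact: hB.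
Qed.

Lemma sup_fval_le M (v : nat -> M) x p B :
  (forall a, fval (upd v x a) p <= B) -> fval v (Sup x p) <= B.
Proof. by move=> h; apply: sup_range_le (inhM M) h. Qed.

Lemma sup_fval_adh M (v : nat -> M) x p eps : 0 < eps ->
  exists a, fval v (Sup x p) - eps < fval (upd v x a) p.
Proof.
have [B hB] := fval_ub M p.
by move=> he; apply: (sup_range_adh (inhM M) (B := B)) => // b; exact: hB.
Qed.

Lemma tval_agree M (v w : nat -> M) t :
  (forall x, tfree x t -> v x = w x) -> tval v t = tval w t.
Proof.
elim: t => [n|f args IH] h /=; first exact: h.
congr funI; apply: funext => i; apply: IH => x hx; apply: h; by exists i.
Qed.

Lemma upd_eq M (v : nat -> M) x a : upd v x a x = a.
Proof. by rewrite /upd eqxx. Qed.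

Lemma upd_neq M (v : nat -> M) x a n : n <> x -> upd v x a n = v n.
Proof. by rewrite /upd => /eqP /negbTE ->. Qed.

Lemma fval_agree M (v w : nat -> M) phi :
  (forall x, ffree x phi -> v x = w x) -> fval v phi = fval w phi.
Proof.
elim: phi v w => //=.
- move=> t1 t2 v w h; rewrite (tval_agree (w:=w) (t:=t1)) ?(tval_agree (w:=w) (t:=t2)) //.
  + by move=> x hx; apply: h; right.
  + by move=> x hx; apply: h; left.
- move=> r args v w h; congr relI; apply: funext => i; apply: tval_agree => x hx.
  by apply: h; exists i.
- move=> p IHp q IHq v w h; rewrite (IHp v w) ?(IHq v w) // => x hx; apply: h; by [right|left].
- by move=> c p IH v w h; rewrite (IH v w).
- move=> y p IH v w h; have -> : (fun a => fval (upd v y a) p) = (fun a => fval (upd w y a) p); last by []; apply: funext => a.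
  apply: IH => x hx.
  rewrite /upd; case: (x =P y) => [_|hne] //; apply: h; split => // e; apply: hne; by rewrite e.
- move=> y p IH v w h; have -> : (fun a => fval (upd v y a) p) = (fun a => fval (upd w y a) p); last by []; apply: funext => a.
  apply: IH => x hx.
  rewrite /upd; case: (x =P y) => [_|hne] //; apply: h; split => // e; apply: hne; by rewrite e.
Qed.

Lemma sentence_const M (v w : nat -> M) phi : sentence phi -> fval v phi = fval w phi.
Proof. by move=> hs; apply: fval_agree => x /hs. Qed.

End Basics.

Section Syntax.
Variable R : realType.
Variable L : Lang R.
Implicit Types (M N K : Struc L).

Definition agree_off M (ys : seq nat) (v w : nat -> M) :=
  forall n, n \notin ys -> v n = w n.

Lemma agree_off_nil M (v w : nat -> M) : agree_off [::] v w -> w = v.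
Proof. by move=> h; apply: funext => n; rewrite h. Qed.

Lemma agree_off_refl M ys (v : nat -> M) : agree_off ys v v.
Proof. by []. Qed.

Lemma foldSup_ub M ys p (v w : nat -> M) :
  agree_off ys v w -> fval w p <= fval v (foldr (@Sup R L) p ys).
Proof.
elim: ys v w => [|y ys IH] v w h /=; first by rewrite (agree_off_nil h).
apply: le_trans (sup_fval_ub v y (foldr (@Sup R L) p ys) (w y)).
apply: IH => n hn; rewrite /upd; case: (n =P y) => [->//|hne].
by apply: h; rewrite in_cons negb_or hn andbT; apply/eqP.
Qed.

Lemma foldSup_adh M ys p (v : nat -> M) eps : 0 < eps ->
  exists w, agree_off ys v w /\ fval v (foldr (@Sup R L) p ys) - eps < fval w p.
Proof.
elim: ys v eps => [|y ys IH] v eps he.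
  by exists v; split => //=; lra.
have he2 : 0 < eps / 2 by rewrite divr_gt0.
have [a ha] := sup_fval_adh v y (foldr (@Sup R L) p ys) he2.
have [w [hw1 hw2]] := IH (upd v y a) _ he2.
exists w; split; last by rewrite [foldr _ _ _]/=; lra.
move=> n; rewrite in_cons negb_or => /andP[/eqP hny hn].
by rewrite -hw1 // upd_neq.
Qed.

Lemma foldSup_le M ys p (v : nat -> M) B :
  (forall w, agree_off ys v w -> fval w p <= B) -> fval v (foldr (@Sup R L) p ys) <= B.
Proof.
move=> h; apply/ler_addgt0Pr => e he.
have [w [hw1 hw2]] := foldSup_adh ys p v he.
have := h w hw1; lra.
Qed.

Lemma foldInf_eq M xs p (v : nat -> M) :
  fval v (foldr (@Inf R L) p xs) = - fval v (foldr (@Sup R L) (Scale (-1) p) xs).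
Proof.
elim: xs v => [|x xs IH] v /=; first by lra.
rewrite inf_range.
have -> : (fun a => -1 * fval (upd v x a) (foldr (@Inf R L) p xs)) =
  (fun a => fval (upd v x a) (foldr (@Sup R L) (Scale (-1) p) xs)).
  by apply: funext => a; rewrite IH; lra.
by [].
Qed.

Lemma foldInf_lb M xs p (v w : nat -> M) :
  agree_off xs v w -> fval v (foldr (@Inf R L) p xs) <= fval w p.
Proof.
move=> h; rewrite foldInf_eq; have := foldSup_ub (Scale (-1) p) h => /=; lra.
Qed.

Lemma foldInf_ge M xs p (v : nat -> M) B :
  (forall w, agree_off xs v w -> B <= fval w p) -> B <= fval v (foldr (@Inf R L) p xs).
Proof.
move=> h; rewrite foldInf_eq.
have : fval v (foldr (@Sup R L) (Scale (-1) p) xs) <= - B.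
  by apply: foldSup_le => w hw /=; have := h w hw; lra.
lra.
Qed.

Lemma tval_emb M N (e : M -> N) (v : nat -> M) t : embedding e ->
  tval (e \o v) t = e (tval v t).
Proof.
case=> _ hf _; elim: t => [n|f args IH] //=.
by rewrite hf; congr funI; apply: funext => i; rewrite IH.
Qed.

Lemma fval_emb M N (e : M -> N) (v : nat -> M) phi : embedding e -> qfree phi ->
  fval (e \o v) phi = fval v phi.
Proof.
move=> he; have [hd _ hr] := he.
elim: phi => //=.
- by move=> t1 t2 _; rewrite !tval_emb.
- move=> r args _; rewrite -hr; congr relI; apply: funext => i; exact: tval_emb.
- by move=> p IHp q IHq [hp hq]; rewrite IHp ?IHq.
- by move=> c p IH hp; rewrite IH.
Qed.

Lemma foldSup_emb M N (e : M -> N) (v : nat -> M) phi ys : embedding e -> qfree phi ->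
  fval v (foldr (@Sup R L) phi ys) <= fval (e \o v) (foldr (@Sup R L) phi ys).
Proof.
move=> he hq; apply: foldSup_le => w hw.
rewrite -(fval_emb w he hq); apply: foldSup_ub => n hn /=; by rewrite hw.
Qed.

Definition elem M N (e : M -> N) := forall phi (v : nat -> M), fval (e \o v) phi = fval v phi.

Fixpoint tfv (t : term L) : seq nat :=
  match t with
  | Var n => [:: n]
  | App f args => flatten [seq tfv (args i) | i <- enum 'I_(farity f)]
  end.

Fixpoint fv (phi : formula L) : seq nat :=
  match phi with
  | One => [::]
  | Dist t1 t2 => tfv t1 ++ tfv t2
  | Rel r args => flatten [seq tfv (args i) | i <- enum 'I_(rarity r)]
  | Add p q => fv p ++ fv q
  | Scale _ p => fv p
  | Sup y p => [seq n <- fv p | n != y]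
  | Inf y p => [seq n <- fv p | n != y]
  end.

Lemma tfree_tfv x t : tfree x t -> x \in tfv t.
Proof.
elim: t => [n|f args IH] /=; first by move=> ->; rewrite mem_seq1.
case=> i hi; apply/flattenP; exists (tfv (args i)); last exact: IH.
by apply: map_f; rewrite mem_enum.
Qed.

Lemma ffree_fv x phi : ffree x phi -> x \in fv phi.
Proof.
elim: phi => //=.
- by move=> t1 t2 [h|h]; rewrite mem_cat (tfree_tfv h) ?orbT.
- move=> r args [i hi]; apply/flattenP; exists (tfv (args i)); last exact: tfree_tfv.
  by apply: map_f; rewrite mem_enum.
- by move=> p IHp q IHq [h|h]; rewrite mem_cat ?(IHp h) ?(IHq h) ?orbT.
- by move=> y p IH [hy h]; rewrite mem_filter (IH h) andbT; apply/eqP => e; apply: hy.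
- by move=> y p IH [hy h]; rewrite mem_filter (IH h) andbT; apply/eqP => e; apply: hy.
Qed.

Fixpoint trn (s : nat -> nat) (t : term L) : term L :=
  match t with
  | Var n => Var L (s n)
  | App f args => App (fun i => trn s (args i))
  end.

Fixpoint frn (s : nat -> nat) (phi : formula L) : formula L :=
  match phi with
  | One => One L
  | Dist t1 t2 => Dist (trn s t1) (trn s t2)
  | Rel r args => Rel (fun i => trn s (args i))
  | Add p q => Add (frn s p) (frn s q)
  | Scale c p => Scale c (frn s p)
  | Sup y p => Sup (s y) (frn s p)
  | Inf y p => Inf (s y) (frn s p)
  end.

Lemma tval_rn M (v : nat -> M) s t : tval v (trn s t) = tval (v \o s) t.
Proof.
elim: t => [n|f args IH] //=; congr funI; apply: funext => i; exact: IH.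
Qed.

Lemma fval_rn M (v : nat -> M) s phi : qfree phi -> fval v (frn s phi) = fval (v \o s) phi.
Proof.
elim: phi => //=.
- by move=> t1 t2 _; rewrite !tval_rn.
- by move=> r args _; congr relI; apply: funext => i; rewrite tval_rn.
- by move=> p IHp q IHq [hp hq]; rewrite IHp ?IHq.
- by move=> c p IH hp; rewrite IH.
Qed.

Lemma qf_rn s phi : qfree phi -> qfree (frn s phi).
Proof.
elim: phi => //=.
by move=> p IHp q IHq [hp hq]; split; auto.
Qed.

Lemma tfree_rn x s t : tfree x (trn s t) -> exists k, tfree k t /\ x = s k.
Proof.
elim: t => [n|f args IH] /=; first by move=> <-; exists n.
case=> i /IH [k [hk ->]]; exists k; split => //; by exists i.
Qed.

Lemma ffree_rn x s phi : qfree phi -> ffree x (frn s phi) -> exists k, ffree k phi /\ x = s k.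
Proof.
elim: phi => //=.
- move=> t1 t2 _ [/tfree_rn [k [hk ->]]|/tfree_rn [k [hk ->]]]; exists k; split => //; by [left|right].
- move=> r args _ [i /tfree_rn [k [hk ->]]]; exists k; split => //; by exists i.
- move=> p IHp q IHq [hp hq] [/(IHp hp) [k [hk ->]]|/(IHq hq) [k [hk ->]]];
    exists k; split => //; by [left|right].
Qed.

Fixpoint sumF (f : nat -> formula L) (n : nat) : formula L :=
  if n is n'.+1 then Add (sumF f n') (f n') else zero_f L.

Lemma fval_sumF M (v : nat -> M) f n :
  fval v (sumF f n) = \sum_(l < n) fval v (f l).
Proof.
elim: n => [|n IH] /=; first by rewrite big_ord0 mul0r.
by rewrite big_ord_recr /= IH.
Qed.

Lemma qf_sumF f n : (forall l, (l < n)%N -> qfree (f l)) -> qfree (sumF f n).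
Proof.
elim: n => [|n IH] h /=; first by [].
split; [apply: IH => l hl; apply: h; exact: ltnW|exact: h].
Qed.

Lemma ffree_sumF x f n : ffree x (sumF f n) -> exists l, (l < n)%N /\ ffree x (f l).
Proof.
elim: n => [|n IH] /=; first by [].
case=> [/IH [l [hl h]]|h]; [exists l; split => //; exact: ltnW | by exists n].
Qed.

Lemma ffree_foldSup x p ys : ffree x (foldr (@Sup R L) p ys) -> x \notin ys /\ ffree x p.
Proof.
elim: ys => [|y ys IH] /=; first by [].
case=> hy /IH [h1 h2]; split => //; rewrite in_cons negb_or h1 andbT.
by apply/eqP => e; apply: hy.
Qed.

Lemma ffree_foldInf x p ys : ffree x (foldr (@Inf R L) p ys) -> x \notin ys /\ ffree x p.
Proof.
elim: ys => [|y ys IH] /=; first by [].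
case=> hy /IH [h1 h2]; split => //; rewrite in_cons negb_or h1 andbT.
by apply/eqP => e; apply: hy.
Qed.

End Syntax.

Section Product.
Variable R : realType.
Variable L : Lang R.
Variables K1 K2 : Struc L.
Variable t : R.
Hypothesis t0 : 0 < t.
Hypothesis t1 : t < 1.

Definition PT := (K1 * K2)%type.

Definition pdist (x y : PT) := t * st_dist x.1 y.1 + (1 - t) * st_dist x.2 y.2.

Lemma pinh : inhabited PT.
Proof. by case: (inhM K1) => a; case: (inhM K2) => b; constructor; exact: (a, b). Qed.

Lemma prefl x : pdist x x = 0.
Proof. by rewrite /pdist !dist_refl !mulr0 addr0. Qed.

Lemma psep x y : pdist x y = 0 -> x = y.
Proof.
rewrite /pdist => h.
have h1 := dist_ge0 x.1 y.1; have h2 := dist_ge0 x.2 y.2.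
have p1 : 0 <= t * st_dist x.1 y.1 by rewrite mulr_ge0 // ltW.
have p2 : 0 <= (1 - t) * st_dist x.2 y.2 by rewrite mulr_ge0 // subr_ge0 ltW.
have e1 : st_dist x.1 y.1 = 0.
  have : t * st_dist x.1 y.1 = 0 by lra.
  by move/eqP; rewrite mulf_eq0 gt_eqF //= => /eqP.
have e2 : st_dist x.2 y.2 = 0.
  have : (1 - t) * st_dist x.2 y.2 = 0 by lra.
  by move/eqP; rewrite mulf_eq0 gt_eqF ?subr_gt0 //= => /eqP.
move: e1 e2 => /dist_sep e1 /dist_sep e2.
by case: x y e1 e2 {h h1 h2 p1 p2} => a b [c d] /= -> ->.
Qed.

Lemma psym x y : pdist x y = pdist y x.
Proof. by rewrite /pdist dist_sym (dist_sym x.2). Qed.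

Lemma ptri x y z : pdist x z <= pdist x y + pdist y z.
Proof.
rewrite /pdist; have h1 := dist_tri x.1 y.1 z.1; have h2 := dist_tri x.2 y.2 z.2.
have a1 : t * st_dist x.1 z.1 <= t * (st_dist x.1 y.1 + st_dist y.1 z.1).
  by apply: ler_wpM2l => //; exact: ltW.
have a2 : (1 - t) * st_dist x.2 z.2 <= (1 - t) * (st_dist x.2 y.2 + st_dist y.2 z.2).
  by apply: ler_wpM2l => //; rewrite subr_ge0 ltW.
lra.
Qed.

Lemma ple1 x y : pdist x y <= 1.
Proof.
rewrite /pdist; have h1 := dist_le1 x.1 y.1; have h2 := dist_le1 x.2 y.2.
have a1 : t * st_dist x.1 y.1 <= t * 1 by apply: ler_wpM2l => //; exact: ltW.
have a2 : (1 - t) * st_dist x.2 y.2 <= (1 - t) * 1.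
  by apply: ler_wpM2l => //; rewrite subr_ge0 ltW.
lra.
Qed.

Definition pfun (f : Fsym L) (a : 'I_(farity f) -> PT) : PT :=
  (funI (fun i => (a i).1), funI (fun i => (a i).2)).

Definition prel (r : Rsym L) (a : 'I_(rarity r) -> PT) : R :=
  t * relI (fun i => (a i).1) + (1 - t) * relI (fun i => (a i).2).

Lemma sum_pdist n (a b : 'I_n -> PT) :
  \sum_(i < n) pdist (a i) (b i) =
  t * \sum_(i < n) st_dist (a i).1 (b i).1 + (1 - t) * \sum_(i < n) st_dist (a i).2 (b i).2.
Proof. by rewrite /pdist big_split /= !mulr_sumr. Qed.

Lemma pfun_lip f a b : pdist (pfun a) (pfun b) <= fLip f * \sum_(i < farity f) pdist (a i) (b i).
Proof.
rewrite sum_pdist /pdist /pfun /=.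
have h1 := funI_lip (fun i => (a i).1) (fun i => (b i).1).
have h2 := funI_lip (fun i => (a i).2) (fun i => (b i).2).
have a1 := ler_wpM2l (ltW t0) h1.
have a2 : (1 - t) * st_dist (funI (fun i => (a i).2)) (funI (fun i => (b i).2)) <=
          (1 - t) * (fLip f * \sum_(i < farity f) st_dist (a i).2 (b i).2).
  by apply: ler_wpM2l => //; rewrite subr_ge0 ltW.
lra.
Qed.

Lemma prel_lip r a b : `|prel a - prel b| <= rLip r * \sum_(i < rarity r) pdist (a i) (b i).
Proof.
rewrite sum_pdist /prel.
have h1 := relI_lip (fun i => (a i).1) (fun i => (b i).1).
have h2 := relI_lip (fun i => (a i).2) (fun i => (b i).2).
have a1 := ler_wpM2l (ltW t0) h1.
have a2 := ler_wpM2l (_ : 0 <= 1 - t) h2.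
have ht : 0 <= 1 - t by rewrite subr_ge0 ltW.
move: (a2 ht) a1 => {a2 h1 h2}.
set x1 := relI (fun i => (a i).1); set y1 := relI (fun i => (b i).1).
set x2 := relI (fun i => (a i).2); set y2 := relI (fun i => (b i).2).
move=> a2 a1.
have e : t * x1 + (1 - t) * x2 - (t * y1 + (1 - t) * y2) = t * (x1 - y1) + (1 - t) * (x2 - y2) by ring.
rewrite e; apply: le_trans (ler_normD _ _) _.
rewrite !normrM (gtr0_norm t0) (ger0_norm ht).
lra.
Qed.

Definition prodS : Struc L := {|
  carrier := PT; st_dist := pdist; st_inh := pinh;
  dist_refl := prefl; dist_sep := psep; dist_sym := psym; dist_tri := ptri;
  dist_le1 := ple1; funI := pfun; relI := prel;
  funI_lip := pfun_lip; relI_lip := prel_lip |}.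

Lemma tval_prod (v : nat -> prodS) tm :
  tval v tm = (tval (fun n => (v n).1) tm, tval (fun n => (v n).2) tm).
Proof.
elim: tm => [n|f args IH] /=; first by case: (v n).
rewrite /pfun /=; congr pair; congr funI; apply: funext => i; by rewrite IH.
Qed.

Lemma upd_fst (v : nat -> prodS) x (a : prodS) :
  (fun n => (upd v x a n).1) = upd (fun n => (v n).1) x a.1.
Proof. by apply: funext => n; rewrite /upd; case: (n == x). Qed.

Lemma upd_snd (v : nat -> prodS) x (a : prodS) :
  (fun n => (upd v x a n).2) = upd (fun n => (v n).2) x a.2.
Proof. by apply: funext => n; rewrite /upd; case: (n == x). Qed.

Definition PH (p : formula L) := forall v : nat -> prodS,
  fval v p = t * fval (fun n => (v n).1) p + (1 - t) * fval (fun n => (v n).2) p.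

Lemma PH_sup p x : PH p -> PH (Sup x p).
Proof.
move=> IH v; rewrite [fval v _]/=.
apply: sup_range_eq.
- move=> a; rewrite IH upd_fst upd_snd.
  have h1 := sup_fval_ub (fun n => (v n).1) x p a.1.
  have h2 := sup_fval_ub (fun n => (v n).2) x p a.2.
  have a1 := ler_wpM2l (ltW t0) h1.
  have a2 : (1 - t) * fval (upd (fun n => (v n).2) x a.2) p <=
            (1 - t) * fval (fun n => (v n).2) (Sup x p).
    by apply: ler_wpM2l => //; rewrite subr_ge0 ltW.
  lra.
- move=> e he.
  have [b1 hb1] := sup_fval_adh (fun n => (v n).1) x p he.
  have [b2 hb2] := sup_fval_adh (fun n => (v n).2) x p he.
  exists ((b1, b2) : prodS); rewrite IH upd_fst upd_snd.
  have -> : ((b1, b2) : prodS).1 = b1 by [].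
  have -> : ((b1, b2) : prodS).2 = b2 by [].
  set S1 := fval _ (Sup x p) in hb1 *; set S2 := fval _ (Sup x p) in hb2 *.
  set f1 := fval _ p in hb1 *; set f2 := fval _ p in hb2 *.
  have a1 : t * (S1 - e) < t * f1 by rewrite ltr_pM2l.
  have a2 : (1 - t) * (S2 - e) < (1 - t) * f2 by rewrite ltr_pM2l // subr_gt0.
  lra.
Qed.

Lemma fval_prod p : PH p.
Proof.
elim: p.
- move=> v /=; ring.
- by move=> t1' t2' v /=; rewrite !tval_prod.
- move=> r args v /=; rewrite /prel; congr (_ + _); congr (_ * relI _);
    apply: funext => i; by rewrite tval_prod.
- move=> p IHp q IHq v /=; rewrite IHp IHq; ring.
- move=> c p IH v /=; rewrite IH; ring.
- move=> x p IH; exact: PH_sup.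
- move=> x p IH v; rewrite !fval_Inf.
  have IH' : PH (Scale (-1) p) by move=> w /=; rewrite IH; ring.
  rewrite (PH_sup x IH'); ring.
Qed.

Lemma prod_models (T : theory L) : models K1 T -> models K2 T -> models prodS T.
Proof.
move=> h1 h2 c hc v; rewrite !fval_prod.
have a1 := ler_wpM2l (ltW t0) (h1 c hc (fun n => (v n).1)).
have a2 : (1 - t) * fval (fun n => (v n).2) c.1 <= (1 - t) * fval (fun n => (v n).2) c.2.
  by apply: ler_wpM2l; [rewrite subr_ge0 ltW|exact: h2].
lra.
Qed.

End Product.

Section Quot.
Variable X : Type.
Variable x0 : X.
Variable eqv : X -> X -> Prop.
Hypothesis eqv_refl : forall x, eqv x x.
Hypothesis eqv_sym : forall x y, eqv x y -> eqv y x.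
Hypothesis eqv_trans : forall x y z, eqv x y -> eqv y z -> eqv x z.

Definition qpick (S : set X) : X :=
  match pselect (exists y, S y) with left h => sval (cid h) | right _ => x0 end.

Lemma qpick_in S : (exists y, S y) -> S (qpick S).
Proof. by rewrite /qpick => h; case: pselect => // h'; exact: (svalP (cid h')). Qed.

Definition canon x := qpick [set y | eqv x y].

Lemma canon_eqv x : eqv x (canon x).
Proof. by apply: (qpick_in (S := [set y | eqv x y])); exists x. Qed.

Lemma canon_eq x y : eqv x y -> canon x = canon y.
Proof.
move=> h; rewrite /canon; congr qpick; rewrite eqEsubset; split => z /=.
  by move=> hz; apply: eqv_trans (eqv_sym h) hz.
by move=> hz; apply: eqv_trans h hz.
Qed.

Lemma canon_idem x : canon (canon x) = canon x.
Proof. by apply: canon_eq; apply: eqv_sym; apply: canon_eqv. Qed.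

Definition QT := {x : X | canon x = x}.

Definition qpi (x : X) : QT := exist _ (canon x) (canon_idem x).

Lemma qval_inj (a b : QT) : proj1_sig a = proj1_sig b -> a = b.
Proof.
case: a b => a ha [b hb] /= e; subst b; congr exist; exact: Prop_irrelevance.
Qed.

Lemma qpi_val (a : QT) : qpi (proj1_sig a) = a.
Proof. by apply: qval_inj; case: a => a ha /=. Qed.

Lemma qpi_eqv x : eqv x (proj1_sig (qpi x)).
Proof. exact: canon_eqv. Qed.

Lemma eqv_qpi x y : eqv x y -> qpi x = qpi y.
Proof. by move=> h; apply: qval_inj => /=; apply: canon_eq. Qed.

Lemma qval_eqv (a b : QT) : eqv (proj1_sig a) (proj1_sig b) -> a = b.
Proof. by move=> h; rewrite -(qpi_val a) -(qpi_val b); apply: eqv_qpi. Qed.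

End Quot.

Section UltraF.
Variable R : realType.

Record UF (I : Type) (U : set_system I) := {
  uT : U setT;
  uI : forall A B, U A -> U B -> U (A `&` B);
  uS : forall A B, A `<=` B -> U A -> U B;
  uN : ~ U set0;
  uC : forall A, U A \/ U (~` A) }.

Lemma directed_ultra (I : Type) (le : I -> I -> Prop) :
  inhabited I -> (forall i j k, le i j -> le j k -> le i k) ->
  (forall i j, exists k, le i k /\ le j k) ->
  exists U : set_system I, UF U /\ forall i0, U [set i | le i0 i].
Proof.
move=> [i1] htr hub.
pose F := fun A : set I => exists i0, forall i, le i0 i -> A i.
have FF : ProperFilter F.
  apply: Build_ProperFilter_ex.
    move=> P [i0 h]; have [k [hk _]] := hub i0 i0; exists k; exact: h.
  split.
  - by exists i1.
  - move=> A B [i hi] [j hj]; have [k [hk1 hk2]] := hub i j.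
    by exists k => l hl; split; [apply: hi; apply: htr hk1 hl|apply: hj; apply: htr hk2 hl].
  - by move=> A B hAB [i hi]; exists i => l hl; apply: hAB; apply: hi.
have [G [GU FG]] := ultraFilterLemma FF.
exists G; split; last first.
  move=> i0; apply: FG; by exists i0.
have GP : ProperFilter G := @ultra_proper _ _ GU.
split.
- exact: filterT.
- by move=> A B; apply: filterI.
- by move=> A B; apply: filterS.
- exact: filter_not_empty.
- by move=> A; apply: in_ultra_setVsetC.
Qed.

Section Ev.
Variable I : Type.
Variable U : set_system I.
Hypothesis hU : UF U.

Definition ev (P : I -> Prop) := U [set i | P i].

Lemma evT (P : I -> Prop) : (forall i, P i) -> ev P.
Proof. by move=> h; apply: (uS hU _ (uT hU)) => i _; exact: h. Qed.

Lemma evS (P Q : I -> Prop) : (forall i, P i -> Q i) -> ev P -> ev Q.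
Proof. by move=> h; apply: (uS hU) => i; exact: h. Qed.

Lemma evI (P Q : I -> Prop) : ev P -> ev Q -> ev (fun i => P i /\ Q i).
Proof. by move=> h1 h2; have := uI hU h1 h2; apply: (uS hU) => i []. Qed.

Lemma ev_ex (P : I -> Prop) : ev P -> exists i, P i.
Proof.
move=> h; apply: contrapT => hn; apply: (uN hU); apply: (uS hU _ h) => i hi.
by apply: hn; exists i.
Qed.

Lemma ev_or (P : I -> Prop) : ev P \/ ev (fun i => ~ P i).
Proof. by case: (uC hU [set i | P i]) => h; [left|right]. Qed.

Definition ulim (a : I -> R) : R := inf [set s | ev (fun i => a i <= s)].
Definition evbnd (a : I -> R) := exists B, ev (fun i => `|a i| <= B).

Lemma eq_of_close (x y : R) : (forall e, 0 < e -> `|x - y| <= e) -> x = y.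
Proof.
move=> h; apply/eqP; rewrite -subr_eq0 -normr_le0; apply/ler_addgt0Pr => e he.
by rewrite add0r; exact: h.
Qed.

Lemma ulimP a : evbnd a -> forall e, 0 < e -> ev (fun i => `|a i - ulim a| <= e).
Proof.
move=> [B hB] e he.
set E := [set s | ev (fun i => a i <= s)].
have hE : E !=set0 by exists B; apply: evS hB => i; rewrite ler_norml => /andP[].
have hlb : lbound E (- B).
  move=> s hs; have [i [h1 h2]] := ev_ex (evI hs hB).
  by move: h2; rewrite ler_norml => /andP[h3 _]; apply: le_trans h3 h1.
have hinf : has_inf E by split => //; exists (- B).
have h1 : ev (fun i => a i <= ulim a + e).
  have [s hs hlt] := inf_adherent he hinf.
  by apply: evS hs => i hi; apply: le_trans hi (ltW hlt).
have h2 : ev (fun i => ulim a - e <= a i).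
  case: (ev_or (fun i => ulim a - e <= a i)) => // hn.
  have hE' : E (ulim a - e) by apply: evS hn => i /negP; rewrite -ltNge => /ltW.
  have := ge_inf (ex_intro _ (- B) hlb) hE'; rewrite /ulim -/E; lra.
by apply: evS (evI h1 h2) => i [hi1 hi2]; rewrite ler_norml; apply/andP; split; lra.
Qed.

Lemma ulim_uniq a r : (forall e, 0 < e -> ev (fun i => `|a i - r| <= e)) -> ulim a = r.
Proof.
move=> h.
have hb : evbnd a.
  exists (`|r| + 1); apply: evS (h 1 ltr01) => i hi.
  have := ler_normD (a i - r) r; rewrite subrK; lra.
apply: eq_of_close => e he.
have he2 : 0 < e / 2 by rewrite divr_gt0.
have [i [h1 h2]] := ev_ex (evI (ulimP hb he2) (h _ he2)).
have := ler_normD (ulim a - a i) (a i - r).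
rewrite distrC in h1; rewrite -addrA (addrA (- a i)) addNr add0r; lra.
Qed.

Lemma evbnd_const c : evbnd (fun _ => c).
Proof. by exists `|c|; apply: evT. Qed.

Lemma ulim_const c : ulim (fun _ => c) = c.
Proof. by apply: ulim_uniq => e he; apply: evT => i; rewrite subrr normr0 ltW. Qed.

Lemma ulim_ev a b : evbnd a -> ev (fun i => a i = b i) -> ulim a = ulim b.
Proof.
move=> ha hab; symmetry; apply: ulim_uniq => e he.
by apply: evS (evI hab (ulimP ha he)) => i [<-].
Qed.

Lemma evbndD a b : evbnd a -> evbnd b -> evbnd (fun i => a i + b i).
Proof.
move=> [A ha] [B hb]; exists (A + B); apply: evS (evI ha hb) => i [h1 h2].
by apply: le_trans (ler_normD _ _) _; apply: lerD.
Qed.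

Lemma evbndZ c a : evbnd a -> evbnd (fun i => c * a i).
Proof.
move=> [A ha]; exists (`|c| * A); apply: evS ha => i h.
by rewrite normrM; apply: ler_wpM2l.
Qed.

Lemma ulimD a b : evbnd a -> evbnd b -> ulim (fun i => a i + b i) = ulim a + ulim b.
Proof.
move=> ha hb; apply: ulim_uniq => e he.
have he2 : 0 < e / 2 by rewrite divr_gt0.
apply: evS (evI (ulimP ha he2) (ulimP hb he2)) => i [h1 h2].
have := ler_normD (a i - ulim a) (b i - ulim b).
have -> : a i - ulim a + (b i - ulim b) = a i + b i - (ulim a + ulim b) by ring.
lra.
Qed.

Lemma ulimZ c a : evbnd a -> ulim (fun i => c * a i) = c * ulim a.
Proof.
move=> ha; apply: ulim_uniq => e he.
have he2 : 0 < e / (`|c| + 1) by rewrite divr_gt0 // ltr_pwDr.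
apply: evS (ulimP ha he2) => i h.
rewrite -mulrBr normrM.
apply: le_trans (ler_wpM2l (normr_ge0 c) h) _.
rewrite mulrA ler_pdivrMr ?ltr_pwDr //; nra.
Qed.

Lemma ulim_le a b : evbnd a -> evbnd b -> ev (fun i => a i <= b i) -> ulim a <= ulim b.
Proof.
move=> ha hb hab; rewrite leNgt; apply/negP => hlt.
set e := (ulim a - ulim b) / 3.
have he : 0 < e by rewrite divr_gt0 // subr_gt0.
have [i [[h1 h2] h3]] := ev_ex (evI (evI (ulimP ha he) (ulimP hb he)) hab).
move: h1 h2; rewrite !ler_norml => /andP[h1 _] /andP[_ h2].
have : ulim a - ulim b = 3 * e by rewrite /e; field.
lra.
Qed.

Lemma ulim_le_const a c : evbnd a -> ev (fun i => a i <= c) -> ulim a <= c.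
Proof. by move=> ha h; rewrite -(ulim_const c); apply: ulim_le => //; exact: evbnd_const. Qed.

Lemma ulim_ge_const a c : evbnd a -> ev (fun i => c <= a i) -> c <= ulim a.
Proof. by move=> ha h; rewrite -(ulim_const c); apply: ulim_le => //; exact: evbnd_const. Qed.

Lemma evbnd_sum n (a : 'I_n -> I -> R) : (forall k, evbnd (a k)) ->
  evbnd (fun i => \sum_(k < n) a k i).
Proof.
elim: n a => [|n IH] a h.
  by exists 0; apply: evT => i; rewrite big_ord0 normr0.
have [B hB] := evbndD (IH (fun k => a (widen_ord (leqnSn n) k)) (fun k => h _)) (h ord_max).
exists B; apply: evS hB => i hi; rewrite big_ord_recr; exact: hi.
Qed.

Lemma ulim_sum n (a : 'I_n -> I -> R) : (forall k, evbnd (a k)) ->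
  ulim (fun i => \sum_(k < n) a k i) = \sum_(k < n) ulim (a k).
Proof.
elim: n a => [|n IH] a h.
  rewrite big_ord0; have -> : (fun i => \sum_(k < 0) a k i) = (fun _ => 0).
    by apply: funext => i; rewrite big_ord0.
  exact: ulim_const.
rewrite big_ord_recr /= -IH; last by move=> k; exact: h.
rewrite -ulimD //; last exact: evbnd_sum.
have -> : (fun i => \sum_(k < n.+1) a k i) =
  (fun i => \sum_(k < n) a (widen_ord (leqnSn n) k) i + a ord_max i).
  by apply: funext => i; rewrite big_ord_recr.
by [].
Qed.

Lemma ulimN a : evbnd a -> ulim (fun i => - a i) = - ulim a.
Proof.
move=> ha; rewrite -mulN1r -ulimZ //; congr ulim; apply: funext => i; by rewrite mulN1r.
Qed.

End Ev.
End UltraF.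

Section Ultraproduct.
Variable R : realType.
Variable L : Lang R.
Variable I : Type.
Variable U : set_system I.
Hypothesis hU : UF U.
Variable K : I -> Struc L.
Hypothesis Bnd : forall r : Rsym L, exists B,
  ev U (fun i => forall a : 'I_(rarity r) -> K i, `|relI a| <= B).

Local Notation ev := (ev U).
Local Notation ulim := (ulim U).
Local Notation evbnd := (evbnd U).
Local Notation evT := (evT hU).
Local Notation evS := (evS hU).
Local Notation evI := (evI hU).
Local Notation ev_ex := (ev_ex hU).
Local Notation ev_or := (ev_or hU).
Local Notation ulimP := (ulimP hU).
Local Notation ulim_uniq := (ulim_uniq hU).
Local Notation evbnd_const := (evbnd_const hU).
Local Notation ulim_const := (ulim_const hU).
Local Notation ulim_ev := (ulim_ev hU).
Local Notation evbndD := (evbndD hU).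
Local Notation evbndZ := (evbndZ hU).
Local Notation ulimD := (ulimD hU).
Local Notation ulimZ := (ulimZ hU).
Local Notation ulim_le := (ulim_le hU).
Local Notation ulim_le_const := (ulim_le_const hU).
Local Notation ulim_ge_const := (ulim_ge_const hU).
Local Notation evbnd_sum := (evbnd_sum hU).
Local Notation ulim_sum := (ulim_sum hU).
Local Notation ulimN := (ulimN hU).

Definition PP := forall i, K i.
Definition px0 : PP := fun i => pt (K i).
Definition dU (x y : PP) := ulim (fun i => st_dist (x i) (y i)).

Lemma evbnd_dist (x y : PP) : evbnd (fun i => st_dist (x i) (y i)).
Proof. by exists 1; apply: evT => // i; rewrite ger0_norm ?dist_ge0 ?dist_le1. Qed.

Lemma dU_ge0 x y : 0 <= dU x y.
Proof. by apply: ulim_ge_const => //; [exact: evbnd_dist|apply: evT => // i; exact: dist_ge0]. Qed.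

Lemma dU_le1 x y : dU x y <= 1.
Proof. by apply: ulim_le_const => //; [exact: evbnd_dist|apply: evT => // i; exact: dist_le1]. Qed.

Lemma dU_refl x : dU x x = 0.
Proof.
rewrite /dU; have -> : (fun i => st_dist (x i) (x i)) = (fun _ => 0).
  by apply: funext => i; rewrite dist_refl.
exact: ulim_const.
Qed.

Lemma dU_sym x y : dU x y = dU y x.
Proof. by rewrite /dU; congr ulim; apply: funext => i; rewrite dist_sym. Qed.

Lemma dU_tri x y z : dU x z <= dU x y + dU y z.
Proof.
rewrite /dU -ulimD //; try exact: evbnd_dist.
apply: ulim_le => //; try exact: evbnd_dist.
  by apply: evbndD => //; exact: evbnd_dist.
by apply: evT => // i; exact: dist_tri.
Qed.

Definition eqvU x y := dU x y = 0.

Lemma eqvU_refl x : eqvU x x. Proof. exact: dU_refl. Qed.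
Lemma eqvU_sym x y : eqvU x y -> eqvU y x. Proof. by rewrite /eqvU dU_sym. Qed.
Lemma eqvU_trans x y z : eqvU x y -> eqvU y z -> eqvU x z.
Proof.
rewrite /eqvU => h1 h2; apply/le_anti/andP; split; last exact: dU_ge0.
by have := dU_tri x y z; rewrite h1 h2 addr0.
Qed.

Lemma dU_congr x x' y y' : eqvU x x' -> eqvU y y' -> dU x y = dU x' y'.
Proof.
rewrite /eqvU => h1 h2; apply/le_anti/andP; split.
  have := dU_tri x x' y; have := dU_tri x' y' y; rewrite dU_sym in h2; lra.
have := dU_tri x' x y'; have := dU_tri x y y'; rewrite dU_sym in h1; lra.
Qed.

Definition UQ := QT px0 eqvU.
Definition upi (x : PP) : UQ := qpi px0 eqvU_refl eqvU_sym eqvU_trans x.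

Lemma upi_eqv x : eqvU x (sval (upi x)).
Proof. exact: qpi_eqv. Qed.

Definition ud (a b : UQ) := dU (sval a) (sval b).

Lemma uinh : inhabited UQ.
Proof. by constructor; exact: upi px0. Qed.

Lemma urefl a : ud a a = 0. Proof. exact: dU_refl. Qed.
Lemma usep a b : ud a b = 0 -> a = b.
Proof. by move=> h; apply: (qval_eqv eqvU_refl eqvU_sym eqvU_trans). Qed.
Lemma usym a b : ud a b = ud b a. Proof. exact: dU_sym. Qed.
Lemma utri a b c : ud a c <= ud a b + ud b c. Proof. exact: dU_tri. Qed.
Lemma ule1 a b : ud a b <= 1. Proof. exact: dU_le1. Qed.

Lemma dU_funI f (x y : 'I_(farity f) -> PP) :
  dU (fun i => funI (fun k => x k i)) (fun i => funI (fun k => y k i)) <=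
  fLip f * \sum_(k < farity f) dU (x k) (y k).
Proof.
rewrite /dU -ulim_sum; last by move=> k; exact: evbnd_dist.
rewrite -ulimZ //; last by apply: evbnd_sum => k; exact: evbnd_dist.
apply: ulim_le => //; first exact: evbnd_dist.
  by apply: evbndZ; apply: evbnd_sum => k; exact: evbnd_dist.
by apply: evT => // i; exact: funI_lip.
Qed.

Lemma funI_congrU f (x y : 'I_(farity f) -> PP) : (forall k, eqvU (x k) (y k)) ->
  eqvU (fun i => funI (fun k => x k i)) (fun i => funI (fun k => y k i)).
Proof.
move=> h; apply/le_anti/andP; split; last exact: dU_ge0.
apply: le_trans (dU_funI x y) _.
by rewrite big1 ?mulr0 // => k _; exact: h.
Qed.

Lemma evbnd_rel r (x : 'I_(rarity r) -> PP) : evbnd (fun i => relI (fun k => x k i)).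
Proof. by have [B hB] := Bnd r; exists B; apply: evS hB => i; apply. Qed.

Lemma evbndN (a : I -> R) : evbnd a -> evbnd (fun i => - a i).
Proof. by case=> B hB; exists B; apply: evS hB => i; rewrite normrN. Qed.

Lemma ulim_dist_le (a b c : I -> R) : evbnd a -> evbnd b -> evbnd c ->
  ev (fun i => `|a i - b i| <= c i) -> `|ulim a - ulim b| <= ulim c.
Proof.
move=> ha hb hc h.
have hab : evbnd (fun i => a i + - b i) by apply: evbndD => //; exact: evbndN.
have e1 : ulim a - ulim b = ulim (fun i => a i + - b i).
  by rewrite ulimD ?ulimN //; exact: evbndN.
rewrite e1 ler_norml; apply/andP; split.
  rewrite -ulimN //; apply: ulim_le => //; first exact: evbndN.
  by apply: evS h => i; rewrite ler_norml => /andP[].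
by apply: ulim_le => //; apply: evS h => i; rewrite ler_norml => /andP[].
Qed.

Lemma relI_congrU r (x y : 'I_(rarity r) -> PP) : (forall k, eqvU (x k) (y k)) ->
  ulim (fun i => relI (fun k => x k i)) = ulim (fun i => relI (fun k => y k i)).
Proof.
move=> h; apply: eq_of_close => e he.
have hc : evbnd (fun i => rLip r * \sum_(k < rarity r) st_dist (x k i) (y k i)).
  by apply: evbndZ; apply: evbnd_sum => k; exact: evbnd_dist.
apply: le_trans (ulim_dist_le (evbnd_rel x) (evbnd_rel y) hc _) _.
  by apply: evT => // i; exact: relI_lip.
rewrite ulimZ; last by apply: evbnd_sum => k; exact: evbnd_dist.
rewrite ulim_sum; last by move=> k; exact: evbnd_dist.
by rewrite big1 ?mulr0 ?ltW // => k _; exact: h.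
Qed.

Definition ufun (f : Fsym L) (a : 'I_(farity f) -> UQ) : UQ :=
  upi (fun i => funI (fun k => sval (a k) i)).

Definition urel (r : Rsym L) (a : 'I_(rarity r) -> UQ) : R :=
  ulim (fun i => relI (fun k => sval (a k) i)).

Lemma ufun_lip f a b : ud (ufun a) (ufun b) <= fLip f * \sum_(k < farity f) ud (a k) (b k).
Proof.
rewrite /ud /ufun -(dU_congr (upi_eqv _) (upi_eqv _)).
exact: (dU_funI (fun k => sval (a k)) (fun k => sval (b k))).
Qed.

Lemma urel_lip r a b : `|urel a - urel b| <= rLip r * \sum_(k < rarity r) ud (a k) (b k).
Proof.
rewrite /urel /ud -ulim_sum; last by move=> k; exact: evbnd_dist.
rewrite -ulimZ //; last by apply: evbnd_sum => k; exact: evbnd_dist.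
apply: ulim_dist_le; try exact: evbnd_rel.
  by apply: evbndZ; apply: evbnd_sum => k; exact: evbnd_dist.
by apply: evT => // i; exact: relI_lip.
Qed.

Definition UStruc : Struc L := {|
  carrier := UQ; st_dist := ud; st_inh := uinh;
  dist_refl := urefl; dist_sep := usep; dist_sym := usym; dist_tri := utri;
  dist_le1 := ule1; funI := ufun; relI := urel;
  funI_lip := ufun_lip; relI_lip := urel_lip |}.

Lemma tval_U (v : nat -> UStruc) (w : forall i, nat -> K i) :
  (forall n, eqvU (sval (v n)) (fun i => w i n)) ->
  forall t, eqvU (sval (tval v t)) (fun i => tval (w i) t).
Proof.
move=> hv; elim => [n|f args IH] /=; first exact: hv.
apply: eqvU_trans (eqvU_sym (upi_eqv _)) _.
exact: (funI_congrU (x := fun k => sval (tval v (args k))) (y := fun k i => tval (w i) (args k))).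
Qed.

Lemma fbndU phi : exists B, ev (fun i => forall u : nat -> K i, `|fval u phi| <= B).
Proof.
elim: phi.
- by exists 1; apply: evT => // i u /=; rewrite normr1.
- move=> t1 t2; exists 1; apply: evT => // i u /=.
  by rewrite ger0_norm ?dist_ge0 ?dist_le1.
- move=> r args; have [B hB] := Bnd r; exists B; apply: evS hB => i h u /=; exact: h.
- move=> p [B1 h1] q [B2 h2]; exists (B1 + B2); apply: evS (evI h1 h2) => i [g1 g2] u /=.
  by apply: le_trans (ler_normD _ _) _; apply: lerD.
- move=> c p [B h]; exists (`|c| * B); apply: evS h => i g u /=.
  by rewrite normrM; apply: ler_wpM2l.
- move=> x p [B h]; exists B; apply: evS h => i g u /=.
  by apply: range_bound (inhM _) _ => a; exact: g.
- move=> x p [B h]; exists B; apply: evS h => i g u /=; rewrite inf_range normrN.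
  by apply: range_bound (inhM _) _ => a; rewrite mulN1r normrN; exact: g.
Qed.

Lemma evbnd_fval phi (w : forall i, nat -> K i) : evbnd (fun i => fval (w i) phi).
Proof. by have [B hB] := fbndU phi; exists B; apply: evS hB => i; apply. Qed.

Definition LH phi := forall (v : nat -> UStruc) (w : forall i, nat -> K i),
  (forall n, eqvU (sval (v n)) (fun i => w i n)) ->
  fval v phi = ulim (fun i => fval (w i) phi).

Lemma ulim_sup (F : forall i, K i -> R) (G : UStruc -> R) B :
  ev (fun i => forall b, `|F i b| <= B) ->
  (forall (a : UStruc) (b : PP), eqvU (sval a) b -> G a = ulim (fun i => F i (b i))) ->
  sup (range G) = ulim (fun i => sup (range (F i))).
Proof.
move=> hB hG.
have hB1 : ev (fun i => forall b, F i b <= B).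
  by apply: evS hB => i h b; have := h b; rewrite ler_norml => /andP[].
have hs : evbnd (fun i => sup (range (F i))).
  by exists B; apply: evS hB => i h; apply: range_bound (inhM _) h.
have hF : forall b : PP, evbnd (fun i => F i (b i)).
  by move=> b; exists B; apply: evS hB => i; apply.
apply: sup_range_eq.
- move=> a; rewrite (hG a (sval a)); last exact: eqvU_refl.
  apply: ulim_le => //; apply: evS hB1 => i h; exact: sup_range_ub h _.
- move=> e he.
  have he2 : 0 < e / 2 by rewrite divr_gt0.
  pose P i (y : K i) := sup (range (F i)) - e / 2 < F i y.
  pose b : PP := fun i => match pselect (exists y, P i y) with
                          | left h => sval (cid h) | right _ => pt (K i) end.
  have hb : ev (fun i => P i (b i)).
    apply: evS hB1 => i h; rewrite /b; case: pselect => [h'|hn].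
      exact: (svalP (cid h')).
    by exfalso; apply: hn; exact: sup_range_adh (inhM _) h _ he2.
  exists (upi b); rewrite (hG _ b); last exact: eqvU_sym (upi_eqv _).
  have : ulim (fun i => sup (range (F i)) + - (e / 2)) <= ulim (fun i => F i (b i)).
    apply: ulim_le => //; first by apply: evbndD => //; exact: evbnd_const.
    by apply: evS hb => i /ltW.
  rewrite ulimD //; last exact: evbnd_const.
  rewrite ulim_const; lra.
Qed.

Lemma LH_sup p x : LH p -> LH (Sup x p).
Proof.
move=> IH v w hv; rewrite [fval v _]/=.
have [B hB] := fbndU p.
apply: (ulim_sup (F := fun i b => fval (upd (w i) x b) p) (B := B)).
  by apply: evS hB => i h b; exact: h.
move=> a b hab; apply: IH => n; rewrite /upd; case: (n == x) => //.
Qed.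

Lemma LH_scale p c : LH p -> LH (Scale c p).
Proof.
move=> IH v w hv /=; rewrite (IH v w hv) ulimZ //; exact: evbnd_fval.
Qed.

Lemma los phi : LH phi.
Proof.
elim: phi.
- move=> v w hv /=; by rewrite ulim_const.
- move=> t1 t2 v w hv /=; rewrite /ud; apply: dU_congr; exact: tval_U.
- move=> r args v w hv /=; rewrite /urel.
  apply: (relI_congrU (x := fun k => sval (tval v (args k))) (y := fun k i => tval (w i) (args k)))
    => k; exact: tval_U.
- move=> p IHp q IHq v w hv /=; rewrite (IHp v w hv) (IHq v w hv) ulimD //; exact: evbnd_fval.
- by move=> c p IH; apply: LH_scale.
- by move=> x p IH; apply: LH_sup.
- move=> x p IH v w hv; rewrite fval_Inf.
  have IH' := LH_sup x (LH_scale (-1) IH).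
  rewrite (IH' v w hv) -ulimN; last exact: evbnd_fval.
  by congr ulim; apply: funext => i; rewrite fval_Inf.
Qed.

Lemma UStruc_models (T : theory L) : (forall i, models (K i) T) -> models UStruc T.
Proof.
move=> hK c hc v.
have hv : forall n, eqvU (sval (v n)) (fun i => sval (v n) i) by move=> n; exact: eqvU_refl.
rewrite (los c.1 hv) (los c.2 hv); apply: ulim_le => //; try exact: evbnd_fval.
by apply: evT => // i; exact: hK.
Qed.

Section Maps.
Variable X : Type.
Variable h : forall i, X -> K i.
Definition hUx (x : X) : UStruc := upi (fun i => h i x).

Lemma fval_hU (u : nat -> X) phi : fval (hUx \o u) phi = ulim (fun i => fval (h i \o u) phi).
Proof. by apply: los => n; exact: eqvU_sym (upi_eqv _). Qed.

Lemma dist_hU x y : st_dist (hUx x) (hUx y) = ulim (fun i => st_dist (h i x) (h i y)).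
Proof. by rewrite /= /ud -(dU_congr (upi_eqv _) (upi_eqv _)). Qed.

Lemma hU_eq x (y : PP) : eqvU (fun i => h i x) y -> hUx x = upi y.
Proof. by move=> e; apply: eqv_qpi. Qed.

Lemma funI_hU f (a : 'I_(farity f) -> X) :
  funI (hUx \o a) = upi (fun i => funI (fun k => h i (a k))).
Proof.
apply: eqv_qpi; apply: (funI_congrU (x := fun k => sval (hUx (a k))) (y := fun k i => h i (a k)))
  => k; exact: eqvU_sym (upi_eqv _).
Qed.

Lemma relI_hU r (a : 'I_(rarity r) -> X) :
  relI (hUx \o a) = ulim (fun i => relI (fun k => h i (a k))).
Proof.
apply: (relI_congrU (x := fun k => sval (hUx (a k))) (y := fun k i => h i (a k)))
  => k; exact: eqvU_sym (upi_eqv _).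
Qed.

End Maps.
End Ultraproduct.

Section Minimax.
Variable R : realType.

Lemma sep2 (S : Type) (P : S -> Prop) (X Y : S -> R) :
  (forall a b, P a -> P b -> forall t, 0 < t -> t < 1 ->
     exists c, P c /\ X c = t * X a + (1 - t) * X b /\ Y c = t * Y a + (1 - t) * Y b) ->
  (forall a, P a -> 0 < X a \/ 0 < Y a) ->
  exists th, 0 <= th /\ th <= 1 /\ forall a, P a -> 0 <= th * X a + (1 - th) * Y a.
Proof.
move=> hconv hpos.
case: (pselect (exists p, P p /\ Y p < 0)) => [[p0 [hp0 hyp0]]|hnb]; last first.
  exists 0; split => //; split => // a ha; rewrite mul0r add0r subr0 mul1r.
  by rewrite leNgt; apply/negP => h; apply: hnb; exists a.
case: (pselect (exists q, P q /\ X q < 0)) => [[q0 [hq0 hxq0]]|hnl]; last first.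
  exists 1; split => //; split => // a ha; rewrite subrr mul0r addr0 mul1r.
  by rewrite leNgt; apply/negP => h; apply: hnl; exists a.
have hXb : forall p, P p -> Y p < 0 -> 0 < X p.
  by move=> p hp hy; case: (hpos p hp) => // h; lra.
have hYl : forall q, P q -> X q < 0 -> 0 < Y q.
  by move=> q hq hx; case: (hpos q hq) => // h; lra.
have key : forall p q, P p -> Y p < 0 -> P q -> X q < 0 -> Y p * X q <= Y q * X p.
  move=> p q hp hyp hq hxq; rewrite leNgt; apply/negP => hlt.
  have hxp := hXb p hp hyp.
  set t := X p / (X p - X q).
  have hd : 0 < X p - X q by lra.
  have ht0 : 0 < t by rewrite divr_gt0.
  have ht1 : t < 1 by rewrite ltr_pdivrMr // mul1r; lra.
  have [c [hc [hxc hyc]]] := hconv q p hq hp t ht0 ht1.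
  have e1 : X c = 0.
    by rewrite hxc /t; field; apply/eqP => h; lra.
  have e2 : Y c * (X p - X q) = X p * Y q - X q * Y p.
    by rewrite hyc /t; field; apply/eqP => h; lra.
  have hyc' : Y c < 0.
    have : Y c * (X p - X q) < 0 by rewrite e2; lra.
    by rewrite pmulr_llt0.
  by case: (hpos c hc); lra.
pose E := [set r | exists p, P p /\ Y p < 0 /\ r = - Y p / X p].
have hE : E !=set0 by exists (- Y p0 / X p0), p0.
have hub : ubound E (Y q0 / (- X q0)).
  move=> r [p [hp [hyp ->]]].
  have hxp := hXb p hp hyp; have hk := key p q0 hp hyp hq0 hxq0.
  rewrite ler_pdivrMr // mulrAC ler_pdivlMr; last by lra.
  lra.
have hsup : has_sup E by split => //; exists (Y q0 / (- X q0)).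
set s := sup E.
have hs0 : 0 <= s.
  apply: le_trans (sup_upper_bound hsup (ex_intro _ p0 (conj hp0 (conj hyp0 erefl)))).
  by rewrite divr_ge0 //; [lra|apply: ltW; exact: hXb].
exists (s / (1 + s)); split; first by rewrite divr_ge0 //; lra.
split; first by rewrite ler_pdivrMr; lra.
move=> a ha.
have e : s / (1 + s) * X a + (1 - s / (1 + s)) * Y a = (s * X a + Y a) / (1 + s).
  by field; apply/eqP => h; lra.
rewrite e divr_ge0 //; last by lra.
case: (ltrP (Y a) 0) => hya.
  have hxa := hXb a ha hya.
  have := sup_upper_bound hsup (ex_intro _ a (conj ha (conj hya erefl))).
  rewrite -/s ler_pdivrMr // => h; lra.
case: (ltrP (X a) 0) => hxa.
  have : s <= Y a / (- X a).
    apply: ge_sup => // r [p [hp [hyp ->]]].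
    have hxp := hXb p hp hyp; have hk := key p a hp hyp ha hxa.
    rewrite ler_pdivrMr // mulrAC ler_pdivlMr; last by lra.
    lra.
  rewrite ler_pdivlMr; last by lra.
  lra.
have : 0 <= s * X a by rewrite mulr_ge0.
lra.
Qed.

Lemma minimax (J : nat) (A : set (nat -> R)) :
  A !=set0 ->
  (forall a b, A a -> A b -> forall t, 0 < t -> t < 1 ->
     exists c, A c /\ forall j, (j < J)%N -> c j = t * a j + (1 - t) * b j) ->
  (forall mu : nat -> R, (forall j, (j < J)%N -> 0 <= mu j) -> \sum_(j < J) mu j = 1 ->
     forall d, 0 < d -> exists a, A a /\ \sum_(j < J) mu j * a j <= d) ->
  forall e, 0 < e -> exists a, A a /\ forall j, (j < J)%N -> a j <= e.
Proof.
elim: J A => [|J IH] A hne hconv hyp e he.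
  by case: hne => a ha; exists a; split.
apply: contrapT => H.
pose A' := [set a | A a /\ a J <= e].
have hne' : A' !=set0.
  pose mu : nat -> R := fun j => (j == J)%:R.
  have hmu0 : forall j, (j < J.+1)%N -> 0 <= mu j by move=> j _; rewrite /mu ler0n.
  have hmu1 : \sum_(j < J.+1) mu j = 1.
    rewrite big_ord_recr /= big1 ?add0r /mu ?eqxx //.
    by move=> j _; rewrite (ltn_eqF (ltn_ord j)).
  have [a [ha hs]] := hyp mu hmu0 hmu1 e he.
  exists a; split => //.
  move: hs; rewrite big_ord_recr /= big1 ?add0r /mu ?eqxx ?mul1r //.
  by move=> j _; rewrite (ltn_eqF (ltn_ord j)) mul0r.
have hconv' : forall a b, A' a -> A' b -> forall t, 0 < t -> t < 1 ->
     exists c, A' c /\ forall j, (j < J)%N -> c j = t * a j + (1 - t) * b j.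
  move=> a b [ha haJ] [hb hbJ] t ht0 ht1.
  have [c [hc hcj]] := hconv a b ha hb t ht0 ht1.
  exists c; split; last by move=> j hj; apply: hcj; exact: ltnW.
  split => //; rewrite hcj //.
  have : t * a J <= t * e by rewrite ler_pM2l.
  have : (1 - t) * b J <= (1 - t) * e by rewrite ler_pM2l // subr_gt0.
  lra.
have nhyp : ~ (forall mu : nat -> R, (forall j, (j < J)%N -> 0 <= mu j) -> \sum_(j < J) mu j = 1 ->
     forall d, 0 < d -> exists a, A' a /\ \sum_(j < J) mu j * a j <= d).
  move=> h'; have [a [[ha haJ] hj]] := IH A' hne' hconv' h' e he.
  apply: H; exists a; split => // j; rewrite ltnS leq_eqVlt => /orP[/eqP ->//|]; exact: hj.
have [mu' [hmu0 [hmu1 [d' [hd' hd]]]]] : exists mu' : nat -> R,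
   (forall j, (j < J)%N -> 0 <= mu' j) /\ \sum_(j < J) mu' j = 1 /\
   exists d', 0 < d' /\ forall a, A' a -> d' < \sum_(j < J) mu' j * a j.
  apply: contrapT => hn; apply: nhyp => mu h0 h1 d hd.
  apply: contrapT => hn2; apply: hn; exists mu; split => //; split => //; exists d; split => //.
  move=> a ha; rewrite ltNge; apply/negP => hle; apply: hn2; by exists a.
pose X (a : nat -> R) := \sum_(j < J) mu' j * a j - d'.
pose Y (a : nat -> R) := a J - e.
have [th [hth0 [hth1 hth]]] : exists th, 0 <= th /\ th <= 1 /\ forall a, A a -> 0 <= th * X a + (1 - th) * Y a.
  apply: sep2.
    move=> a b ha hb t ht0 ht1.
    have [c [hc hcj]] := hconv a b ha hb t ht0 ht1.
    exists c; split => //; split.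
      rewrite /X; have -> : \sum_(j < J) mu' j * c j =
         t * \sum_(j < J) mu' j * a j + (1 - t) * \sum_(j < J) mu' j * b j.
        rewrite !mulr_sumr -big_split /=; apply: eq_bigr => j _.
        rewrite hcj; last exact: (ltn_trans (ltn_ord j) (ltnSn J)).
        ring.
      ring.
    by rewrite /Y hcj //; ring.
  move=> a ha; rewrite /X /Y; case: (lerP (a J) e) => haJ; last by right; lra.
  by left; have := hd a (conj ha haJ); lra.
pose g := Num.min d' e.
have hg : 0 < g by rewrite /g lt_min hd' he.
pose mu : nat -> R := fun j => if (j < J)%N then th * mu' j else 1 - th.
have hmu0' : forall j, (j < J.+1)%N -> 0 <= mu j.
  move=> j _; rewrite /mu; case: ifP => hj; last by lra.
  by rewrite mulr_ge0 // hmu0.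
have hsplit : forall a : nat -> R, \sum_(j < J.+1) mu j * a j =
    th * \sum_(j < J) mu' j * a j + (1 - th) * a J.
  move=> a; rewrite big_ord_recr /= /mu ltnn mulr_sumr; congr (_ + _).
  by apply: eq_bigr => j _; rewrite ltn_ord mulrA.
have hmu1' : \sum_(j < J.+1) mu j = 1.
  rewrite big_ord_recr /= /mu ltnn.
  under eq_bigr => j _ do rewrite ltn_ord.
  rewrite -mulr_sumr hmu1; lra.
have hg2 : 0 < g / 2 by rewrite divr_gt0.
have [a [ha hs]] := hyp mu hmu0' hmu1' _ hg2.
have h1 := hth a ha.
rewrite hsplit in hs.
have hgd : g <= d' by rewrite /g ge_min lexx.
have hge : g <= e by rewrite /g ge_min lexx orbT.
have : th * g + (1 - th) * g <= th * d' + (1 - th) * e.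
  apply: lerD; [exact: ler_wpM2l|apply: ler_wpM2l => //; lra].
rewrite /X /Y in h1.
lra.
Qed.

End Minimax.

Section Chain.
Variable R : realType.
Variable L : Lang R.
Variable Ms : nat -> Struc L.
Variable es : forall n, Ms n -> Ms n.+1.
Implicit Types (M N P : Struc L).

Definition castM (n p : nat) (e : n = p) (x : Ms n) : Ms p := eq_rect n Ms x p e.

Fixpoint mk (n : nat) (x : Ms n) (p : nat) {struct p} : Ms p :=
  match p as p0 return Ms p0 with
  | 0 => match n =P 0 with ReflectT e => castM e x | ReflectF _ => pt (Ms 0) end
  | p'.+1 => match n =P p'.+1 with
             | ReflectT e => castM e x
             | ReflectF _ => if (n <= p')%N then es (mk x p') else pt (Ms p'.+1) end
  end.

Lemma mk_self n (x : Ms n) : mk x n = x.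
Proof.
case: n x => [|n] x /=.
  by case: (0 =P 0) => [e|h]; [rewrite (eq_irrelevance e erefl)|case: h].
by case: (n.+1 =P n.+1) => [e|h]; [rewrite (eq_irrelevance e erefl)|case: h].
Qed.

Lemma mk_succ n (x : Ms n) p : (n <= p)%N -> mk x p.+1 = es (mk x p).
Proof.
move=> hnp /=; case: (n =P p.+1) => [e|_]; last by rewrite hnp.
by exfalso; move: hnp; rewrite e ltnn.
Qed.

Lemma mk_ind n (x : Ms n) (P : forall p, Ms p -> Prop) :
  P n x -> (forall p (y : Ms p), (n <= p)%N -> P p y -> P p.+1 (es y)) ->
  forall p, (n <= p)%N -> P p (mk x p).
Proof.
move=> h0 hS.
have hk : forall k, P (k + n)%N (mk x (k + n)).
  elim => [|k IH]; first by rewrite /= mk_self.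
  rewrite addSn mk_succ ?leq_addl //; apply: hS => //; exact: leq_addl.
by move=> p hp; have := hk (p - n)%N; rewrite subnK.
Qed.

Lemma mk_trans n m p (x : Ms n) : (n <= m)%N -> (m <= p)%N -> mk (mk x m) p = mk x p.
Proof.
move=> hnm; apply: (mk_ind (P := fun p y => y = mk x p)) => //.
move=> q y hmq ->; rewrite mk_succ //; exact: leq_trans hmq.
Qed.

Lemma mk_es n (x : Ms n) p : (n < p)%N -> mk (es x) p = mk x p.
Proof.
move=> h; have <- : mk x n.+1 = es x by rewrite mk_succ // mk_self.
by rewrite mk_trans.
Qed.

Hypothesis hes : forall n, embedding (@es n).

Lemma mk_fun_ind n (Q : forall p, (Ms n -> Ms p) -> Prop) :
  Q n id -> (forall p (f : Ms n -> Ms p), (n <= p)%N -> Q p f -> Q p.+1 (fun x => es (f x))) ->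
  forall p, (n <= p)%N -> Q p (fun x => mk x p).
Proof.
move=> h0 hS.
have hk : forall k, Q (k + n)%N (fun x => mk x (k + n)).
  elim => [|k IH].
    have -> : (fun x : Ms n => mk x (0 + n)) = id by apply: funext => x; rewrite mk_self.
    exact: h0.
  have -> : (fun x : Ms n => mk x (k.+1 + n)) = (fun x => es (mk x (k + n))).
    by apply: funext => x; exact: (mk_succ x (leq_addl k n)).
  apply: hS => //; exact: leq_addl.
by move=> p hp; have := hk (p - n)%N; rewrite subnK.
Qed.

Lemma emb_id M : embedding (@id M).
Proof. by []. Qed.

Lemma emb_comp M N P (f : M -> N) (g : N -> P) : embedding f -> embedding g ->
  embedding (fun x => g (f x)).
Proof.
case=> hf1 hf2 hf3 [hg1 hg2 hg3]; split.
- by move=> x y; rewrite hg1 hf1.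
- by move=> fs a; rewrite hf2 hg2.
- by move=> r a; rewrite hg3 hf3.
Qed.

Lemma emb_inj M N (f : M -> N) : embedding f -> forall x y, f x = f y -> x = y.
Proof. by case=> h _ _ x y e; apply: dist_sep; rewrite -h e dist_refl. Qed.

Lemma elem_comp M N P (f : M -> N) (g : N -> P) : elem f -> elem g ->
  elem (fun x => g (f x)).
Proof. by move=> hf hg phi v; rewrite -(hf phi v) -(hg phi (f \o v)). Qed.



Lemma mk_emb n p : (n <= p)%N -> embedding (fun x : Ms n => mk x p).
Proof.
apply: (mk_fun_ind (Q := fun p f => embedding f)); first exact: emb_id.
by move=> q f _ hf; apply: emb_comp hf (hes q).
Qed.

Lemma mk_inj n p (x y : Ms n) : (n <= p)%N -> mk x p = mk y p -> x = y.
Proof. by move=> h e; exact: (emb_inj (mk_emb h) e). Qed.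

Lemma mk_dist n p (x y : Ms n) : (n <= p)%N -> st_dist (mk x p) (mk y p) = st_dist x y.
Proof. by move=> h; case: (mk_emb h) => h1 _ _; exact: h1. Qed.

Lemma mk_funI n p f (a : 'I_(farity f) -> Ms n) : (n <= p)%N ->
  mk (funI a) p = funI (fun k => mk (a k) p).
Proof. by move=> h; case: (mk_emb h) => _ h2 _; exact: h2. Qed.

Lemma mk_relI n p r (a : 'I_(rarity r) -> Ms n) : (n <= p)%N ->
  relI (fun k => mk (a k) p) = relI a.
Proof. by move=> h; case: (mk_emb h) => _ _ h3; exact: h3. Qed.

Definition XC := {n : nat & Ms n}.
Definition lv (a : XC) := projT1 a.
Definition el (a : XC) : Ms (lv a) := projT2 a.

Definition eqvC (a b : XC) := forall q, (lv a <= q)%N -> (lv b <= q)%N -> mk (el a) q = mk (el b) q.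

Lemma eqvC_of (a b : XC) q : (lv a <= q)%N -> (lv b <= q)%N -> mk (el a) q = mk (el b) q -> eqvC a b.
Proof.
move=> ha hb e q' ha' hb'.
apply: (mk_inj (p := (q + q')%N)); first exact: leq_addl.
rewrite !mk_trans ?leq_addl ?leq_addr //.
by rewrite -(mk_trans (m := q)) ?leq_addr // e mk_trans ?leq_addr.
Qed.

Lemma eqvC_refl a : eqvC a a. Proof. by []. Qed.
Lemma eqvC_sym a b : eqvC a b -> eqvC b a. Proof. by move=> h q ha hb; rewrite h. Qed.
Lemma eqvC_trans a b c : eqvC a b -> eqvC b c -> eqvC a c.
Proof.
move=> h1 h2; set q := (lv a + lv b + lv c)%N.
have ha : (lv a <= q)%N by rewrite /q -addnA leq_addr.
have hb : (lv b <= q)%N by rewrite /q addnAC leq_addl.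
have hc : (lv c <= q)%N by rewrite /q leq_addl.
apply: (@eqvC_of a c q ha hc); by rewrite h1 // h2.
Qed.

Definition x0C : XC := existT _ 0%N (pt (Ms 0)).
Definition UCT := QT x0C eqvC.
Definition cpi (a : XC) : UCT := qpi x0C eqvC_refl eqvC_sym eqvC_trans a.

Lemma cpi_eqv a : eqvC a (sval (cpi a)).
Proof. exact: (qpi_eqv x0C eqvC_refl eqvC_sym eqvC_trans a). Qed.

Definition DC (a b : XC) q := st_dist (mk (el a) q) (mk (el b) q).
Definition dC (a b : XC) := DC a b (lv a + lv b).

Lemma DC_up a b q r : (lv a <= q)%N -> (lv b <= q)%N -> (q <= r)%N -> DC a b r = DC a b q.
Proof.
move=> ha hb hqr; rewrite /DC -(mk_trans (m := q) (el a)) // -(mk_trans (m := q) (el b)) //.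
exact: mk_dist.
Qed.

Lemma DC_const a b q : (lv a <= q)%N -> (lv b <= q)%N -> DC a b q = dC a b.
Proof.
move=> ha hb; rewrite /dC -(DC_up ha hb (leq_addr (lv a + lv b) q)).
apply: DC_up; [exact: leq_addr|exact: leq_addl|exact: leq_addl].
Qed.

Lemma dC_congr a a' b b' : eqvC a a' -> eqvC b b' -> dC a b = dC a' b'.
Proof.
move=> h1 h2; set q := (lv a + lv b + lv a' + lv b')%N.
have ha : (lv a <= q)%N by rewrite /q; lia.
have hb : (lv b <= q)%N by rewrite /q; lia.
have ha' : (lv a' <= q)%N by rewrite /q; lia.
have hb' : (lv b' <= q)%N by rewrite /q; lia.
by rewrite -(DC_const ha hb) -(DC_const ha' hb') /DC h1 // h2.
Qed.

Definition ucd (x y : UCT) := dC (sval x) (sval y).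

Lemma uc_inh : inhabited UCT. Proof. by constructor; exact: cpi x0C. Qed.
Lemma uc_refl x : ucd x x = 0. Proof. by rewrite /ucd /dC /DC dist_refl. Qed.
Lemma uc_sym x y : ucd x y = ucd y x.
Proof.
rewrite /ucd /dC addnC; rewrite /DC dist_sym //.
Qed.
Lemma uc_tri x y z : ucd x z <= ucd x y + ucd y z.
Proof.
rewrite /ucd; set a := sval x; set b := sval y; set c := sval z.
set q := (lv a + lv b + lv c)%N.
have ha : (lv a <= q)%N by rewrite /q -addnA leq_addr.
have hb : (lv b <= q)%N by rewrite /q addnAC leq_addl.
have hc : (lv c <= q)%N by rewrite /q leq_addl.
rewrite -(DC_const ha hc) -(DC_const ha hb) -(DC_const hb hc); exact: dist_tri.
Qed.
Lemma uc_le1 x y : ucd x y <= 1. Proof. exact: dist_le1. Qed.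
Lemma uc_sep x y : ucd x y = 0 -> x = y.
Proof.
move=> h; apply: (qval_eqv eqvC_refl eqvC_sym eqvC_trans).
apply: (eqvC_of (q := (lv (sval x) + lv (sval y))%N)); [exact: leq_addr|exact: leq_addl|].
exact: dist_sep.
Qed.

Definition lvl n (r : 'I_n -> XC) : nat := \max_(k < n) lv (r k).

Lemma lvl_ge n (r : 'I_n -> XC) k : (lv (r k) <= lvl r)%N.
Proof. exact: (leq_bigmax (F := fun k => lv (r k))). Qed.

Definition ucfun (f : Fsym L) (a : 'I_(farity f) -> UCT) : UCT :=
  let r := fun k => sval (a k) in
  cpi (existT _ (lvl r) (funI (fun k => mk (el (r k)) (lvl r)))).

Definition ucrel (s : Rsym L) (a : 'I_(rarity s) -> UCT) : R :=
  let r := fun k => sval (a k) in relI (fun k => mk (el (r k)) (lvl r)).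

Lemma relI_lvl s (r : 'I_(rarity s) -> XC) q : (lvl r <= q)%N ->
  relI (fun k => mk (el (r k)) (lvl r)) = relI (fun k => mk (el (r k)) q).
Proof.
move=> h; rewrite -(mk_relI (p := q) (fun k => mk (el (r k)) (lvl r))) //.
congr relI; apply: funext => k; rewrite mk_trans //; exact: lvl_ge.
Qed.

Lemma uc_fun_lip f a b : ucd (ucfun a) (ucfun b) <= fLip f * \sum_(k < farity f) ucd (a k) (b k).
Proof.
rewrite /ucd /ucfun /=.
set ra := fun k => sval (a k); set rb := fun k => sval (b k).
set A := existT _ (lvl ra) _; set B := existT _ (lvl rb) _.
rewrite -(dC_congr (cpi_eqv (a:=A)) (cpi_eqv (a:=B))).
set q := (lvl ra + lvl rb)%N.
have hA : (lv A <= q)%N by exact: leq_addr.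
have hB : (lv B <= q)%N by exact: leq_addl.
rewrite -(DC_const hA hB) /DC /A /B /el /= !mk_funI //.
have -> : (fun k => mk (mk (projT2 (ra k)) (lvl ra)) q) = (fun k => mk (projT2 (ra k)) q).
  by apply: funext => k; rewrite mk_trans //; exact: (lvl_ge ra k).
have -> : (fun k => mk (mk (projT2 (rb k)) (lvl rb)) q) = (fun k => mk (projT2 (rb k)) q).
  by apply: funext => k; rewrite mk_trans //; exact: (lvl_ge rb k).
apply: le_trans (funI_lip _ _) _.
rewrite ler_wpM2l ?fLip_ge0 //; apply: ler_sum => k _.
have h1 : (lv (ra k) <= q)%N by apply: leq_trans (lvl_ge ra k) (leq_addr _ _).
have h2 : (lv (rb k) <= q)%N by apply: leq_trans (lvl_ge rb k) (leq_addl _ _).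
by have := DC_const h1 h2; rewrite /DC /el => ->.
Qed.

Lemma uc_rel_lip s a b : `|ucrel a - ucrel b| <= rLip s * \sum_(k < rarity s) ucd (a k) (b k).
Proof.
rewrite /ucrel /ucd.
set ra := fun k => sval (a k); set rb := fun k => sval (b k).
set q := (lvl ra + lvl rb)%N.
rewrite (relI_lvl (q := q)) ?leq_addr // (relI_lvl (r := rb) (q := q)) ?leq_addl //.
apply: le_trans (relI_lip _ _) _.
rewrite ler_wpM2l ?rLip_ge0 //; apply: ler_sum => k _.
have h1 : (lv (ra k) <= q)%N by apply: leq_trans (lvl_ge ra k) (leq_addr _ _).
have h2 : (lv (rb k) <= q)%N by apply: leq_trans (lvl_ge rb k) (leq_addl _ _).
by have := DC_const h1 h2; rewrite /DC /el => ->.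
Qed.

Definition UCS : Struc L := {|
  carrier := UCT; st_dist := ucd; st_inh := uc_inh;
  dist_refl := uc_refl; dist_sep := uc_sep; dist_sym := uc_sym; dist_tri := uc_tri;
  dist_le1 := uc_le1; funI := ucfun; relI := ucrel;
  funI_lip := uc_fun_lip; relI_lip := uc_rel_lip |}.

Definition gsC n (x : Ms n) : UCS := cpi (existT _ n x).

Lemma UCS_union : is_union es gsC.
Proof.
split.
- move=> n; split.
  + move=> x y; rewrite /= /ucd /gsC.
    rewrite -(dC_congr (cpi_eqv (a:=existT _ n x)) (cpi_eqv (a:=existT _ n y))).
    by rewrite -(DC_const (q := n)) //= /DC /el /= mk_self mk_self.
  + move=> f a; rewrite /= /ucfun /gsC; apply: eqv_qpi.
    set r := fun k => sval (cpi (existT _ n (a k))).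
    apply: (eqvC_of (q := (n + lvl r)%N)) => //=; [exact: leq_addr|exact: leq_addl|].
    rewrite /el /= !mk_funI ?leq_addr ?leq_addl //; congr funI; apply: funext => k.
    rewrite mk_trans ?leq_addl //; last exact: lvl_ge.
    symmetry; apply: (eqvC_sym (cpi_eqv (a:=existT _ n (a k)))) => //=;
      [exact: (leq_trans (lvl_ge r k) (leq_addl _ _))|exact: leq_addr].
  + move=> s a; rewrite /= /ucrel /gsC.
    set r := fun k => sval (cpi (existT _ n (a k))).
    rewrite (relI_lvl (q := (n + lvl r)%N)) ?leq_addl //.
    rewrite -(mk_relI (p := (n + lvl r)%N) a) ?leq_addr //.
    congr relI; apply: funext => k.
    apply: (eqvC_sym (cpi_eqv (a:=existT _ n (a k)))) => //=;
      [exact: (leq_trans (lvl_ge r k) (leq_addl _ _))|exact: leq_addr].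
- move=> n x; rewrite /gsC; apply: eqv_qpi => q /= h1 h2.
  by rewrite /el /= mk_es.
- move=> y; exists (lv (sval y)), (el (sval y)); rewrite /gsC.
  have -> : existT _ (lv (sval y)) (el (sval y)) = sval y by case: (sval y).
  exact: qpi_val.
Qed.

End Chain.

Section UnionFacts.
Variable R : realType.
Variable L : Lang R.
Variable Ms : nat -> Struc L.
Unset Implicit Arguments.
Variable es : forall n, Ms n -> Ms n.+1.
Hypothesis hes : forall n, embedding (es n).
Variable N : Struc L.
Variable gs : forall n, Ms n -> N.
Set Implicit Arguments.
Hypothesis hu : is_union es gs.

Lemma gs_mk n (x : Ms n) p : (n <= p)%N -> gs p (mk es x p) = gs n x.
Proof.
case: hu => _ hc _.
apply: (mk_ind (P := fun p y => gs p y = gs n x)) => // q y _ <-; exact: hc.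
Qed.

Lemma gs_emb n : embedding (gs n).
Proof. by case: hu. Qed.

Lemma finite_lift (F : seq nat) (w : nat -> N) :
  exists q (w' : nat -> Ms q), forall k, k \in F -> gs q (w' k) = w k.
Proof.
elim: F => [|k F [q [w' hw']]].
  by exists 0%N, (fun _ => pt (Ms 0)).
case: hu => _ _ hs; have [m [b hb]] := hs (w k).
exists (m + q)%N, (fun j => if j == k then mk es b (m + q) else mk es (w' j) (m + q)).
move=> j; rewrite in_cons; case: (j =P k) => [->|hjk] /= h.
  by rewrite gs_mk ?leq_addr.
by rewrite gs_mk ?leq_addl // hw'.
Qed.

Hypothesis hel : forall n, elem (es n).

Lemma mk_elem n p : (n <= p)%N -> elem (fun x : Ms n => mk es x p).
Proof.
apply: (mk_fun_ind (Q := fun p f => elem f)); first by move=> phi v.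
by move=> q f _ hf; exact: (elem_comp hf (@hel q)).
Qed.

Definition EH phi := forall n (u : nat -> Ms n), fval (gs n \o u) phi = fval u phi.

Lemma EH_sup p x : EH p -> EH (Sup x p).
Proof.
move=> IH n u; rewrite [fval (gs n \o u) _]/=.
apply: sup_range_eq.
- move=> a; case: hu => _ _ hs; have [m [b <-]] := hs a.
  set q := (m + n)%N.
  have e : upd (gs n \o u) x (gs m b) = gs q \o upd (fun k => mk es (u k) q) x (mk es b q).
    apply: funext => k; rewrite /upd /=; case: (k == x).
      by rewrite gs_mk // leq_addr.
    by rewrite gs_mk // leq_addl.
  rewrite e IH.
  apply: le_trans (sup_fval_ub _ _ _ _) _.
  by rewrite (mk_elem (leq_addl m n) (Sup x p) u).
- move=> eps he; have [b hb] := sup_fval_adh u x p he.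
  exists (gs n b).
  have e : upd (gs n \o u) x (gs n b) = gs n \o upd u x b.
    by apply: funext => k; rewrite /upd /=; case: (k == x).
  by rewrite e IH.
Qed.

Lemma EH_scale c p : EH p -> EH (Scale c p).
Proof. by move=> IH n u /=; rewrite IH. Qed.

Lemma elem_union n : elem (gs n).
Proof.
move=> phi; move: n; elim: phi.
- by [].
- by move=> t1 t2 n u /=; rewrite !tval_emb //; case: (gs_emb n).
- move=> r args n u /=; case: (gs_emb n) => _ _ h3; rewrite -h3.
  by congr relI; apply: funext => i; rewrite tval_emb //; exact: gs_emb.
- by move=> p IHp q IHq n u /=; rewrite IHp IHq.
- by move=> c p IH; apply: EH_scale.
- by move=> x p IH; apply: EH_sup.
- move=> x p IH n u; rewrite !fval_Inf.
  by rewrite (EH_sup x (EH_scale (-1) IH)).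
Qed.

End UnionFacts.

Section EasyDir.
Variable R : realType.
Variable L : Lang R.
Variable Ms : nat -> Struc L.
Unset Implicit Arguments.
Variable es : forall n, Ms n -> Ms n.+1.
Variable N : Struc L.
Variable gs : forall n, Ms n -> N.
Set Implicit Arguments.
Hypothesis hu : is_union es gs.

Lemma AE_union (c : condition L) : AE_condition c ->
  (forall n (v : nat -> Ms n), fval v c.1 <= fval v c.2) ->
  forall v : nat -> N, fval v c.1 <= fval v c.2.
Proof.
case: c => c1 c2 [_ [/= -> [xs [ys [phi [hq /= ->]]]]]] hM v.
rewrite mul0r; apply: foldInf_ge => w hw.
have [q [w' hw']] := finite_lift hu (fv (foldr (@Sup R L) phi ys)) w.
rewrite (fval_agree (w := gs q \o w')); last first.
  by move=> x hx; rewrite /= hw' //; exact: ffree_fv.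
apply: le_trans _ (foldSup_emb w' ys (gs_emb hu q) hq).
apply: le_trans _ (foldInf_lb (foldr (@Sup R L) phi ys) (@agree_off_refl _ _ _ xs w')).
by have := hM q w'; rewrite mul0r.
Qed.

End EasyDir.

Section Helpers.

Definition inS (X : Type) (S : seq X) (b : X) := has (fun c => `[< c = b >]) S.
Definition idxS (X : Type) (S : seq X) (b : X) : nat := find (fun c => `[< c = b >]) S.

Lemma nth_idxS X (S : seq X) b d : inS S b -> nth d S (idxS S b) = b.
Proof. by move=> h; have /asboolP := nth_find d h. Qed.

Lemma idxS_lt X (S : seq X) b : inS S b -> (idxS S b < size S)%N.
Proof. by rewrite /inS has_find. Qed.

Lemma inS_nth X (S : seq X) d m : (m < size S)%N -> inS S (nth d S m).
Proof.
move=> h; apply/(has_nthP d); exists m => //; exact/asboolP.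
Qed.

Lemma inS_map X (f : nat -> X) (s : seq nat) k : k \in s -> inS (map f s) (f k).
Proof. by move=> h; rewrite /inS has_map; apply/hasP; exists k => //; apply/asboolP. Qed.

Fixpoint Sfl X (G : nat -> seq X) (J : nat) : seq X :=
  if J is J'.+1 then Sfl G J' ++ G J' else [::].

Lemma inS_Sfl X (G : nat -> seq X) J l b : (l < J)%N -> inS (G l) b -> inS (Sfl G J) b.
Proof.
elim: J => [//|J IH]; rewrite ltnS leq_eqVlt => /orP[/eqP ->|hl] h /=.
  by rewrite /inS has_cat; apply/orP; right; exact: h.
by rewrite /inS has_cat; apply/orP; left; exact: IH.
Qed.

Definition tupA (X : Type) n (a : 'I_n -> X) (d : X) : nat -> X :=
  fun m => match insub m with Some k => a k | None => d end.

Lemma tupA_val X n (a : 'I_n -> X) d (k : 'I_n) : tupA a d k = a k.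
Proof. by rewrite /tupA valK. Qed.

Definition Ix (Q : Type) := (seq Q * nat)%type.
Definition leI (Q : Type) (i j : Ix Q) :=
  (forall r, List.In r i.1 -> List.In r j.1) /\ (i.2 <= j.2)%N.

Lemma ultra_Ix (Q : Type) : exists U : set_system (Ix Q), UF U /\ forall i0, U [set i | leI i0 i].
Proof.
apply: directed_ultra.
- by constructor; exact: ([::], 0%N).
- move=> i j k [h1 h2] [h3 h4]; split; [move=> r hr; auto|exact: leq_trans h4].
- move=> i j; exists (i.1 ++ j.1, (i.2 + j.2)%N); split; split => /=.
  + by move=> r hr; apply: List.in_or_app; left.
  + exact: leq_addr.
  + by move=> r hr; apply: List.in_or_app; right.
  + exact: leq_addl.
Qed.

Variable R : realType.

Lemma small_inv (e : R) : 0 < e -> exists n : nat, (n.+1%:R)^-1 <= e.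
Proof. by move=> he; have [k hk] := ltr_add_invr he; exists k; rewrite add0r in hk; exact: ltW. Qed.

Lemma ev_req (Q : Type) (U : set_system (Ix Q)) (hU : UF U)
  (hT : forall i0, U [set i | leI i0 i]) (r : Q) (e : R) : 0 < e ->
  ev U (fun i => List.In r i.1 /\ (i.2.+1%:R)^-1 <= e).
Proof.
move=> he; have [n hn] := small_inv he.
have H : ev U (fun i => leI ([:: r], n) i) := hT ([:: r], n).
apply: (evS hU _ H) => i [h1 h2]; split; first by apply: h1; left.
apply: le_trans hn; rewrite lef_pV2 ?posrE ?ltr0Sn // ler_nat; exact: h2.
Qed.

End Helpers.

Lemma In_nthS (X : Type) (r0 : X) (rs : seq X) r :
  List.In r rs -> exists l, (l < size rs)%N /\ nth r0 rs l = r.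
Proof.
elim: rs => [//|x rs IH] /= [->|/IH [l [hl e]]]; first by exists 0%N.
by exists l.+1.
Qed.

Lemma tupA_out (X : Type) n (a : 'I_n -> X) d m : (n <= m)%N -> tupA a d m = d.
Proof. by move=> h; rewrite /tupA insubF // ltnNge h. Qed.

Section S2.
Variable R : realType.
Variable L : Lang R.
Variables M N : Struc L.
Variable e : M -> N.
Hypothesis he : embedding e.
Hypothesis hex : forall (Phi : formula L) ys (u : nat -> M), qfree Phi ->
  fval (e \o u) (foldr (@Sup R L) Phi ys) <= fval u (foldr (@Sup R L) Phi ys).

Definition inE (b : N) := `[< exists x, e x = b >].
Definition einv (b : N) : M :=
  match pselect (exists x, e x = b) with left h => sval (cid h) | right _ => pt M end.

Lemma e_einv b : inE b -> e (einv b) = b.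
Proof.
move/asboolP => h; rewrite /einv; case: pselect => [h'|//].
exact: (svalP (cid h')).
Qed.

Lemma einv_e x : einv (e x) = x.
Proof. by apply: (emb_inj he); rewrite e_einv //; apply/asboolP; exists x. Qed.

Definition rho (r : Rsym L) : R := sval (cid (relI_bnd M r)).
Lemma rhoP r (a : 'I_(rarity r) -> M) : `|relI a| <= rho r.
Proof. exact: (svalP (cid (relI_bnd M r))). Qed.

Definition okK (K : Struc L) (jK : M -> K) (h : N -> K) :=
  [/\ elem jK, (forall r (a : 'I_(rarity r) -> K), `|relI a| <= rho r) & forall x, h (e x) = jK x].

Definition Req := (formula L * (nat -> N))%type.

Section Real.
Variable rs : seq Req.
Let J := size rs.
Let r0 : Req := (zero_f L, fun _ => pt N).
Let phi l : formula L := let p := (nth r0 rs l).1 in if `[< qfree p >] then p else zero_f L.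
Let w l : nat -> N := (nth r0 rs l).2.

Lemma phi_qf l : qfree (phi l).
Proof. by rewrite /phi; case: asboolP. Qed.

Definition Fl (K : Struc L) (h : N -> K) l := fval (h \o w l) (phi l) - fval (w l) (phi l).
Definition coord (K : Struc L) (h : N -> K) (j : nat) :=
  if (j < J)%N then Fl h j else - Fl h (j - J).

Definition Aset : set (nat -> R) :=
  [set a | exists (K : Struc L) (jK : M -> K) (h : N -> K), okK jK h /\
     forall j, (j < J + J)%N -> a j = coord h j].

Lemma Aset_ne : Aset !=set0.
Proof.
exists (coord (einv : N -> M)), M, id, einv; split => //; split => //.
- exact: rhoP.
- exact: einv_e.
Qed.

Lemma Aset_conv a b : Aset a -> Aset b -> forall t, 0 < t -> t < 1 ->
  exists c, Aset c /\ forall j, (j < J + J)%N -> c j = t * a j + (1 - t) * b j.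
Proof.
move=> [K1 [j1 [h1 [[el1 bd1 c1] ha]]]] [K2 [j2 [h2 [[el2 bd2 c2] hb]]]] t t0 t1.
pose K := prodS K1 K2 t0 t1.
pose jK : M -> K := fun x => (j1 x, j2 x).
pose h : N -> K := fun b => (h1 b, h2 b).
have hF : forall l, Fl h l = t * Fl h1 l + (1 - t) * Fl h2 l.
  by move=> l; rewrite /Fl (fval_prod (t0 := t0) (t1 := t1)) /=; ring.
exists (coord h); split.
  exists K, jK, h; split => //; split.
  - move=> p v; rewrite (fval_prod (t0 := t0) (t1 := t1)) /=.
    by rewrite (el1 p v) (el2 p v); ring.
  - move=> r x /=; rewrite /prel.
    have ht : 0 <= 1 - t by rewrite subr_ge0 ltW.
    have a1 := ler_wpM2l (ltW t0) (bd1 r (fun i => (x i).1)).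
    have a2 := ler_wpM2l ht (bd2 r (fun i => (x i).2)).
    apply: le_trans (ler_normD _ _) _; rewrite !normrM (gtr0_norm t0) (ger0_norm ht).
    lra.
  - by move=> x; rewrite /h /jK c1 c2.
move=> j hj; rewrite ha // hb // /coord; case: ifP => _; rewrite hF; ring.
Qed.

Lemma Aset_sep (mu : nat -> R) d : 0 < d ->
  exists a, Aset a /\ \sum_(j < J + J) mu j * a j <= d.
Proof.
move=> hd.
pose lam l := mu l - mu (J + l)%N.
pose S := Sfl (fun l => map (w l) (fv (phi l))) J.
pose sg l k := idxS S (w l k).
pose Psi := Scale (-1) (sumF (fun l => Scale (lam l) (frn (sg l) (phi l))) J).
have hPsi : qfree Psi by apply: qf_sumF => l _ /=; apply: qf_rn; exact: phi_qf.
pose b0 := pt N.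
pose ys := [seq m <- iota 0 (size S) | ~~ inE (nth b0 S m)].
pose u m := einv (nth b0 S m).
pose w' m := if m \in ys then nth b0 S m else e (u m).
have F2 : forall l k, (l < J)%N -> k \in fv (phi l) -> inS S (w l k).
  by move=> l k hl hk; apply: (inS_Sfl (G := fun l => map (w l) (fv (phi l))) hl); exact: inS_map.
have F1 : forall b, inS S b -> w' (idxS S b) = b.
  move=> b hb; rewrite /w'; case: ifP => hin; first exact: nth_idxS.
  have hE : inE (nth b0 S (idxS S b)).
    by move: hin; rewrite mem_filter mem_iota /= add0n idxS_lt // andbT => /negbFE.
  by rewrite /u nth_idxS // e_einv // -(nth_idxS b0 hb).
have F3 : fval w' Psi = - \sum_(l < J) lam l * fval (w l) (phi l).
  rewrite /Psi [fval _ (Scale _ _)]/= fval_sumF mulN1r; congr (- _); apply: eq_bigr => l _ /=.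
  rewrite fval_rn; last exact: phi_qf.
  congr (_ * _); apply: fval_agree => x hx /=.
  by rewrite /sg F1 //; apply: F2 => //; exact: ffree_fv.
have F4 : agree_off ys (e \o u) w' by move=> m hm; rewrite /w' (negbTE hm).
have H1 := foldSup_ub Psi F4.
have H2 := hex ys u hPsi.
have [u' [hu'1 hu'2]] := foldSup_adh ys Psi u hd.
pose h b := if inE b then einv b else u' (idxS S b).
have F5 : forall x, h (e x) = x.
  move=> x; rewrite /h; have -> : inE (e x) by apply/asboolP; exists x.
  exact: einv_e.
have F6 : forall b, inS S b -> u' (idxS S b) = h b.
  move=> b hb; rewrite /h; case: ifP => hE //.
  rewrite -hu'1; last by rewrite mem_filter nth_idxS // hE.
  by rewrite /u nth_idxS.
have F7 : fval u' Psi = - \sum_(l < J) lam l * fval (h \o w l) (phi l).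
  rewrite /Psi [fval _ (Scale _ _)]/= fval_sumF mulN1r; congr (- _); apply: eq_bigr => l _ /=.
  rewrite fval_rn; last exact: phi_qf.
  congr (_ * _); apply: fval_agree => x hx /=.
  by rewrite /sg F6 //; apply: F2 => //; exact: ffree_fv.
exists (coord h); split.
  exists M, id, h; split => //; split => //; exact: rhoP.
have Esum : \sum_(j < J + J) mu j * coord h j =
   \sum_(l < J) lam l * fval (h \o w l) (phi l) - \sum_(l < J) lam l * fval (w l) (phi l).
  rewrite big_split_ord /= -sumrB -big_split /=; apply: eq_bigr => l _.
  rewrite /coord /= ltn_ord ltnNge leq_addr /= addKn /Fl /lam; ring.
rewrite Esum; lra.
Qed.

Lemma real2 eps : 0 < eps ->
  exists p : {K : Struc L & ((M -> K) * (N -> K))%type}, okK (projT2 p).1 (projT2 p).2 /\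
   forall r, List.In r rs -> qfree r.1 -> `|fval ((projT2 p).2 \o r.2) r.1 - fval r.2 r.1| <= eps.
Proof.
move=> heps.
have [a [[K [jK [h [hok hco]]]] hle]] :=
  minimax Aset_ne Aset_conv (fun mu _ _ d hd => Aset_sep mu hd) heps.
exists (existT _ K (jK, h)); split => // r hr hq.
have [l [hl hnth]] := In_nthS r0 hr.
have hphi : phi l = r.1 by rewrite /phi hnth; case: asboolP.
have hw : w l = r.2 by rewrite /w hnth.
have h1 := hle l (leq_trans hl (leq_addr _ _)).
have hJl : (J + l < J + J)%N by rewrite ltn_add2l.
have h2 := hle (J + l)%N hJl.
rewrite hco in h1; last exact: (leq_trans hl (leq_addr _ _)).
rewrite hco in h2; last exact: hJl.
move: h1 h2; rewrite /coord hl ltnNge leq_addr /= addKn /Fl hphi hw /= => h1 h2.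
rewrite ler_norml; apply/andP; split; lra.
Qed.

End Real.
Theorem S2_main : exists (M1 : Struc L) (f : N -> M1) (j : M -> M1),
  [/\ embedding f, elem j & forall x, j x = f (e x)].
Proof.
have [U [hU hT]] := ultra_Ix Req.
pose eps (i : Ix Req) : R := (i.2.+1%:R)^-1.
have heps : forall i, 0 < eps i by move=> i; rewrite invr_gt0 ltr0Sn.
pose ch i := sval (cid (real2 i.1 (heps i))).
have chP : forall i, okK (projT2 (ch i)).1 (projT2 (ch i)).2 /\
   forall r, List.In r i.1 -> qfree r.1 ->
     `|fval ((projT2 (ch i)).2 \o r.2) r.1 - fval r.2 r.1| <= eps i.
  by move=> i; exact: (svalP (cid (real2 i.1 (heps i)))).
pose K i := projT1 (ch i).
pose jf i : M -> K i := (projT2 (ch i)).1.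
pose hf i : N -> K i := (projT2 (ch i)).2.
have Bnd : forall r, exists B, ev U (fun i => forall a : 'I_(rarity r) -> K i, `|relI a| <= B).
  move=> r; exists (rho r); apply: (evT hU) => i a.
  by case: (chP i) => [[_ hb _] _]; exact: hb.
exists (UStruc hU Bnd), (hUx hU Bnd hf), (hUx hU Bnd jf).
have close : forall (p : formula L) (w : nat -> N), qfree p -> forall eps', 0 < eps' ->
    ev U (fun i => `|fval (hf i \o w) p - fval w p| <= eps').
  move=> p w hq eps' he'; apply: (evS hU _ (ev_req hU hT (p, w) he')) => i [hin hle].
  by case: (chP i) => _ h; exact: le_trans (h _ hin hq) hle.
split.
- split.
  + move=> x y; rewrite dist_hU; apply: (ulim_uniq hU) => eps' he'.
    have := close (Dist (@Var R L 0) (@Var R L 1)) (fun n => if n == 0%N then x else y) I eps' he'.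
    by apply: (evS hU) => i.
  + move=> f a; rewrite funI_hU; apply: (hU_eq hU Bnd).
    rewrite /eqvU /dU; apply: (ulim_uniq hU) => eps' he'.
    pose w := tupA a (funI a).
    have := close (Dist (@Var R L (farity f)) (@App R L f (fun k => @Var R L k))) w I eps' he'.
    apply: (evS hU) => i /=.
    have e1 : w (farity f) = funI a by rewrite /w tupA_out.
    have e2 : (fun k : 'I_(farity f) => w k) = a by apply: funext => k; rewrite /w tupA_val.
    have e3 : (fun k : 'I_(farity f) => hf i (w k)) = (fun k => hf i (a k)).
      by apply: funext => k; rewrite /w tupA_val.
    by rewrite e1 e2 e3 dist_refl.
  + move=> r a; rewrite relI_hU; apply: (ulim_uniq hU) => eps' he'.
    have := close (@Rel R L r (fun k => @Var R L k)) (tupA a (pt N)) I eps' he'.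
    apply: (evS hU) => i /=.
    have e2 : (fun k : 'I_(rarity r) => tupA a (pt N) k) = a by apply: funext => k; rewrite tupA_val.
    have e3 : (fun k : 'I_(rarity r) => hf i (tupA a (pt N) k)) = (fun k => hf i (a k)).
      by apply: funext => k; rewrite tupA_val.
    by rewrite e2 e3.
- move=> p u; rewrite fval_hU.
  have -> : (fun i => fval (jf i \o u) p) = (fun _ => fval u p).
    by apply: funext => i; case: (chP i) => [[hel _ _] _]; exact: hel.
  exact: ulim_const.
- move=> x; rewrite /hUx; congr (upi hU _); apply: functional_extensionality_dep => i.
  by case: (chP i) => [[_ _ hc] _]; rewrite /hf /jf hc.
Qed.

End S2.

Lemma mem_Sfl (X : eqType) (G : nat -> seq X) J l b : (l < J)%N -> b \in G l -> b \in Sfl G J.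
Proof.
elim: J => [//|J IH]; rewrite ltnS leq_eqVlt => /orP[/eqP ->|hl] h /=.
  by rewrite mem_cat h orbT.
by rewrite mem_cat IH.
Qed.

Lemma mem_Sfl_inv (X : eqType) (G : nat -> seq X) J b : b \in Sfl G J ->
  exists l, (l < J)%N /\ b \in G l.
Proof.
elim: J => [//|J IH] /=; rewrite mem_cat => /orP[/IH [l [hl h]]|h].
  by exists l; split => //; exact: ltnW.
by exists J.
Qed.

Definition cod (l k : nat) : nat := (Cantor.to_nat (l, k)).*2.+1.

Lemma odd_cod l k : odd (cod l k).
Proof. by rewrite /cod /= odd_double. Qed.

Lemma half_cod l k : Cantor.of_nat (cod l k)./2 = (l, k).
Proof.
by rewrite /cod -[(_.*2).+1]/(true + (Cantor.to_nat (l, k)).*2)%N half_bit_double Cantor.cancel_of_to.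
Qed.

Lemma cod_half n : odd n -> cod (Cantor.of_nat n./2).1 (Cantor.of_nat n./2).2 = n.
Proof.
move=> hn; rewrite /cod -surjective_pairing Cantor.cancel_to_of.
by rewrite -[in RHS](odd_double_half n) hn.
Qed.

Section Block.
Variable R : realType.
Variable L : Lang R.
Variables K M : Struc L.
Variable g : M -> K.
Variable J : nat.
Variable phi : nat -> formula L.
Variable ys : nat -> seq nat.
Variable u : nat -> nat -> M.
Variable mu : nat -> R.
Variable c0 : R.
Hypothesis hq : forall l, qfree (phi l).
Hypothesis hmu : forall l, (l < J)%N -> 0 <= mu l.
Hypothesis hmu1 : \sum_(l < J) mu l = 1.

Definition Sb := Sfl (fun l => map (u l) (fv (phi l))) J.
Definition sgb l k := if k \in ys l then cod l k else (idxS Sb (u l k)).*2.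
Definition Xsb := [seq m.*2 | m <- iota 0 (size Sb)].
Definition Ysb := Sfl (fun l => map (cod l) (ys l)) J.
Definition Psib := Add (sumF (fun l => Scale (mu l) (frn (sgb l) (phi l))) J) (Scale (- c0) (One L)).

Lemma fval_Psib (w : nat -> K) :
  fval w Psib = \sum_(l < J) mu l * fval (w \o sgb l) (phi l) - c0.
Proof.
rewrite /Psib [fval w (Add _ _)]/= fval_sumF /= mulr1; congr (_ + _).
by apply: eq_bigr => l _ /=; rewrite fval_rn.
Qed.

Lemma Ysb_odd n : n \in Ysb -> odd n.
Proof.
by case/mem_Sfl_inv => l [_ /mapP [k _ ->]]; exact: odd_cod.
Qed.

Lemma inSb l k : (l < J)%N -> k \in fv (phi l) -> inS Sb (u l k).
Proof.
by move=> hl hk; apply: (inS_Sfl (G := fun l => map (u l) (fv (phi l))) hl); exact: inS_map.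
Qed.

Lemma block (v : nat -> K) : (forall a, inS Sb a -> v (idxS Sb a).*2 = g a) ->
  fval v (foldr (@Sup R L) Psib Ysb) =
  \sum_(l < J) mu l * fval (g \o u l) (foldr (@Sup R L) (phi l) (ys l)) - c0.
Proof.
move=> hv.
set B := fun l => fval (g \o u l) (foldr (@Sup R L) (phi l) (ys l)).
have hub : forall w, agree_off Ysb v w -> fval w Psib <= \sum_(l < J) mu l * B l - c0.
  move=> w hw; rewrite fval_Psib lerD2r; apply: ler_sum => l _.
  apply: ler_wpM2l; first exact: hmu.
  pose wl k := if k \in ys l then w (sgb l k) else g (u l k).
  have -> : fval (w \o sgb l) (phi l) = fval wl (phi l).
    apply: fval_agree => k hk; rewrite /wl /=; case: ifP => hky //.
    rewrite /sgb hky -hw; first by apply: hv; apply: inSb => //; exact: ffree_fv.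
    by apply/negP => /Ysb_odd; rewrite odd_double.
  apply: foldSup_ub => k hk; rewrite /wl (negbTE hk) //.
apply/le_anti/andP; split; first exact: foldSup_le hub.
apply/ler_addgt0Pr => eps he.
have he2 : 0 < eps / 2 by rewrite divr_gt0.
pose W l := sval (cid (foldSup_adh (ys l) (phi l) (g \o u l) he2)).
have WP : forall l, agree_off (ys l) (g \o u l) (W l) /\ B l - eps / 2 < fval (W l) (phi l).
  by move=> l; exact: (svalP (cid (foldSup_adh (ys l) (phi l) (g \o u l) he2))).
pose w n := if odd n then
    (if ((Cantor.of_nat n./2).1 < J)%N && ((Cantor.of_nat n./2).2 \in ys (Cantor.of_nat n./2).1)
     then W (Cantor.of_nat n./2).1 (Cantor.of_nat n./2).2 else v n) else v n.
have hw : agree_off Ysb v w.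
  move=> n hn; rewrite /w; case: ifP => hodd //; case: ifP => // /andP [hl hk].
  exfalso; move/negP: hn; apply; rewrite -(cod_half hodd).
  by apply: (mem_Sfl hl); apply: map_f.
have eqW : forall l, (l < J)%N -> fval (w \o sgb l) (phi l) = fval (W l) (phi l).
  move=> l hl; apply: fval_agree => k hk /=; rewrite /sgb.
  case: ifP => hky.
    by rewrite /w odd_cod half_cod /= hl hky.
  rewrite /w odd_double hv; last by apply: inSb => //; exact: ffree_fv.
  by case: (WP l) => hag _; rewrite -hag ?hky.
have := foldSup_ub Psib hw; rewrite fval_Psib.
have hsum : \sum_(l < J) mu l * (B l - eps / 2) <= \sum_(l < J) mu l * fval (w \o sgb l) (phi l).
  apply: ler_sum => l _; rewrite eqW //; apply: ler_wpM2l; first exact: hmu.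
  by case: (WP l) => _ h; exact: ltW.
have e1 : \sum_(l < J) mu l * (B l - eps / 2) = \sum_(l < J) mu l * B l - eps / 2.
  rewrite -[X in _ - X]mul1r -hmu1 mulr_suml -sumrB; apply: eq_bigr => l _; ring.
rewrite e1 in hsum.
lra.
Qed.

Lemma sent_block : sentence (foldr (@Inf R L) (foldr (@Sup R L) Psib Ysb) Xsb).
Proof.
move=> x /ffree_foldInf [hX /ffree_foldSup [hY]].
rewrite /Psib /= => -[|//].
case/ffree_sumF => l [hl /= /(ffree_rn (hq l))] [k [hk ex]]; subst x.
move: hX hY; rewrite /sgb; case: ifP => hky.
  by move=> _ /negP; apply; apply: (mem_Sfl hl); apply: map_f.
move=> /negP hX _; apply: hX; apply: map_f; rewrite mem_iota add0n /=.
by apply: idxS_lt; apply: inSb => //; exact: ffree_fv.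
Qed.

End Block.

Section S1.
Variable R : realType.
Variable L : Lang R.
Variable T : theory L.
Variable M : Struc L.

Definition T'AE (c : condition L) := AE_condition c /\
  forall K : Struc L, models K T -> forall v : nat -> K, fval v c.1 <= fval v c.2.

Hypothesis hM : forall c, T'AE c -> forall v : nat -> M, fval v c.1 <= fval v c.2.

Lemma exists_model : exists K : Struc L, models K T.
Proof.
apply: contrapT => hn.
pose c0 : condition L := (zero_f L, Scale (-1) (One L)).
have h : T'AE c0.
  split.
    split; first by move=> x.
    split => //; exists [::], [::], (Scale (-1) (One L)); split => //.
  by move=> K hK; exfalso; apply: hn; exists K.
have := hM h (fun _ => pt M); rewrite /= mul0r mulr1; lra.
Qed.

Definition Req1 := (formula L * seq nat * (nat -> M))%type.

Section Real1.
Variable rs : seq Req1.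
Let J := size rs.
Let r0 : Req1 := (zero_f L, [::], fun _ => pt M).
Let phi l : formula L := let p := (nth r0 rs l).1.1 in if `[< qfree p >] then p else zero_f L.
Let ysl l : seq nat := (nth r0 rs l).1.2.
Let ul l : nat -> M := (nth r0 rs l).2.
Let tv l := fval (ul l) (foldr (@Sup R L) (phi l) (ysl l)).

Lemma phi1_qf l : qfree (phi l).
Proof. by rewrite /phi; case: asboolP. Qed.

Definition F1 (K : Struc L) (g : M -> K) l :=
  fval (g \o ul l) (foldr (@Sup R L) (phi l) (ysl l)) - tv l.

Definition A1 : set (nat -> R) :=
  [set a | exists (K : Struc L) (g : M -> K), models K T /\ forall j, (j < J)%N -> a j = F1 g j].

Lemma A1_ne : A1 !=set0.
Proof.
have [K hK] := exists_model.
by exists (F1 (fun _ : M => pt K)), K, (fun _ => pt K).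
Qed.

Lemma A1_conv a b : A1 a -> A1 b -> forall t, 0 < t -> t < 1 ->
  exists c, A1 c /\ forall j, (j < J)%N -> c j = t * a j + (1 - t) * b j.
Proof.
move=> [K1 [g1 [hK1 ha]]] [K2 [g2 [hK2 hb]]] t t0 t1.
pose K := prodS K1 K2 t0 t1.
pose g : M -> K := fun x => (g1 x, g2 x).
exists (F1 g); split.
  by exists K, g; split => //; exact: prod_models.
move=> j hj; rewrite ha // hb // /F1 (fval_prod (t0 := t0) (t1 := t1)) /=; ring.
Qed.

Lemma A1_sep (mu : nat -> R) : (forall j, (j < J)%N -> 0 <= mu j) -> \sum_(j < J) mu j = 1 ->
  forall d, 0 < d -> exists a, A1 a /\ \sum_(j < J) mu j * a j <= d.
Proof.
move=> hmu hmu1 d hd; apply: contrapT => H.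
have H' : forall (K : Struc L) (g : M -> K), models K T -> d < \sum_(j < J) mu j * F1 g j.
  move=> K g hK; rewrite ltNge; apply/negP => hle; apply: H.
  by exists (F1 g); split => //; exists K, g.
pose c0 := \sum_(l < J) mu l * tv l + d.
pose Cond : condition L := (zero_f L,
  foldr (@Inf R L) (foldr (@Sup R L) (Psib J phi ysl ul mu c0) (Ysb J ysl)) (Xsb J phi ul)).
have hqP : qfree (Psib J phi ysl ul mu c0).
  split => //; apply: qf_sumF => l _ /=; apply: qf_rn; exact: phi1_qf.
have hC : T'AE Cond.
  split.
    split; first exact: sent_block phi1_qf.
    split => //; exists (Xsb J phi ul), (Ysb J ysl), (Psib J phi ysl ul mu c0); split => //.
  move=> K hK v; rewrite /Cond [fval v (zero_f L)]/= mul0r.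
  apply: foldInf_ge => w hw.
  pose g (a : M) := w (idxS (Sb J phi ul) a).*2.
  rewrite (block (g := g) ysl c0 phi1_qf hmu hmu1) //.
  have := H' K g hK.
  have -> : \sum_(j < J) mu j * F1 g j =
     \sum_(l < J) mu l * fval (g \o ul l) (foldr (@Sup R L) (phi l) (ysl l)) - \sum_(l < J) mu l * tv l.
    by rewrite -sumrB; apply: eq_bigr => l _; rewrite /F1; ring.
  rewrite /c0; lra.
pose v0 (m : nat) : M := if odd m then pt M else nth (pt M) (Sb J phi ul) m./2.
have := hM hC v0; rewrite /Cond [fval v0 (zero_f L)]/= mul0r => h0.
have h1 := foldInf_lb (foldr (@Sup R L) (Psib J phi ysl ul mu c0) (Ysb J ysl)) (@agree_off_refl _ _ _ (Xsb J phi ul) v0).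
rewrite (block (g := id) ysl c0 phi1_qf hmu hmu1) in h1; last first.
  by move=> a ha; rewrite /v0 odd_double doubleK nth_idxS.
have : \sum_(l < J) mu l * fval (id \o ul l) (foldr (@Sup R L) (phi l) (ysl l)) = \sum_(l < J) mu l * tv l by [].
rewrite /c0 in h1; lra.
Qed.

Lemma real1 eps : 0 < eps ->
  exists p : {K : Struc L & M -> K}, models (projT1 p) T /\
   forall r : Req1, List.In r rs -> qfree r.1.1 ->
     fval (projT2 p \o r.2) (foldr (@Sup R L) r.1.1 r.1.2) <= fval r.2 (foldr (@Sup R L) r.1.1 r.1.2) + eps.
Proof.
move=> heps.
have [a [[K [g [hK hco]]] hle]] := minimax A1_ne A1_conv A1_sep heps.
exists (existT _ K g); split => // r hr hq.
have [l [hl hnth]] := In_nthS r0 hr.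
have hphi : phi l = r.1.1 by rewrite /phi hnth; case: asboolP.
have hy : ysl l = r.1.2 by rewrite /ysl hnth.
have hu : ul l = r.2 by rewrite /ul hnth.
have := hle l hl; rewrite hco // /F1 /tv hphi hy hu /=; lra.
Qed.

End Real1.
Theorem S1_main : exists (N : Struc L) (e : M -> N),
  [/\ models N T, embedding e &
   forall (Phi : formula L) ys (u : nat -> M), qfree Phi ->
     fval (e \o u) (foldr (@Sup R L) Phi ys) <= fval u (foldr (@Sup R L) Phi ys)].
Proof.
have [U [hU hT]] := ultra_Ix Req1.
pose eps (i : Ix Req1) : R := (i.2.+1%:R)^-1.
have heps : forall i, 0 < eps i by move=> i; rewrite invr_gt0 ltr0Sn.
pose ch i := sval (cid (real1 i.1 (heps i))).
have chP : forall i, models (projT1 (ch i)) T /\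
   forall r : Req1, List.In r i.1 -> qfree r.1.1 ->
     fval (projT2 (ch i) \o r.2) (foldr (@Sup R L) r.1.1 r.1.2) <=
     fval r.2 (foldr (@Sup R L) r.1.1 r.1.2) + eps i.
  by move=> i; exact: (svalP (cid (real1 i.1 (heps i)))).
pose K i := projT1 (ch i).
pose g i : M -> K i := projT2 (ch i).
have close : forall (p : formula L) ys (u : nat -> M), qfree p -> forall eps', 0 < eps' ->
    ev U (fun i => fval (g i \o u) (foldr (@Sup R L) p ys) <= fval u (foldr (@Sup R L) p ys) + eps').
  move=> p ys u hq eps' he'; apply: (evS hU _ (ev_req hU hT (p, ys, u) he')) => i [hin hle].
  case: (chP i) => _ h; apply: le_trans (h _ hin hq) _; exact: lerD.
have close2 : forall (p : formula L) (u : nat -> M), qfree p -> forall eps', 0 < eps' ->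
    ev U (fun i => `|fval (g i \o u) p - fval u p| <= eps').
  move=> p u hq eps' he'.
  have hq' : qfree (Scale (-1) p) by [].
  apply: (evS hU _ (evI hU (close p [::] u hq eps' he') (close _ [::] u hq' eps' he'))).
  move=> i /= [h1 h2]; rewrite ler_norml; apply/andP; split; lra.
have Bnd : forall r, exists B, ev U (fun i => forall a : 'I_(rarity r) -> K i, `|relI a| <= B).
  move=> r.
  exists (`|relI (fun _ : 'I_(rarity r) => pt M)| + 1 + rLip r * (rarity r)%:R).
  have := close2 (@Rel R L r (fun k => @Var R L k)) (fun _ => pt M) I 1 ltr01.
  apply: (evS hU) => i /= h a.
  have h1 := relI_lip a (fun _ => g i (pt M)).
  have h2 := sum_dist_le1 a (fun _ => g i (pt M)).
  have h3 : rLip r * \sum_(k < rarity r) st_dist (a k) (g i (pt M)) <= rLip r * (rarity r)%:R.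
    by apply: ler_wpM2l => //; exact: rLip_ge0.
  have h4 := ler_dist_dist (relI a) (relI (fun _ : 'I_(rarity r) => g i (pt M))).
  have h5 := ler_dist_dist (relI (fun _ : 'I_(rarity r) => g i (pt M))) (relI (fun _ : 'I_(rarity r) => pt M)).
  rewrite ler_norml in h4; rewrite ler_norml in h5; case/andP: h4 => _ h4; case/andP: h5 => _ h5.
  have h6 := ler_norml (relI (fun _ : 'I_(rarity r) => pt M)) `|relI (fun _ : 'I_(rarity r) => pt M)|.
  rewrite ler_norml in h; case/andP: h => h7 h8.
  have h9 : `|relI a| <= `|relI (fun _ : 'I_(rarity r) => g i (pt M))| + rLip r * (rarity r)%:R by lra.
  have h10 : `|relI (fun _ : 'I_(rarity r) => g i (pt M))| <= `|relI (fun _ : 'I_(rarity r) => pt M)| + 1.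
    have := ler_normD (relI (fun _ : 'I_(rarity r) => g i (pt M)) - relI (fun _ : 'I_(rarity r) => pt M))
              (relI (fun _ : 'I_(rarity r) => pt M)).
    rewrite subrK => h11.
    have : `|relI (fun _ : 'I_(rarity r) => g i (pt M)) - relI (fun _ : 'I_(rarity r) => pt M)| <= 1.
      by rewrite ler_norml; apply/andP; split.
    lra.
  lra.
exists (UStruc hU Bnd), (hUx hU Bnd g); split.
- by apply: UStruc_models => i; case: (chP i).
- split.
  + move=> x y; rewrite dist_hU; apply: (ulim_uniq hU) => eps' he'.
    have := close2 (Dist (@Var R L 0) (@Var R L 1)) (fun n => if n == 0%N then x else y) I eps' he'.
    by apply: (evS hU) => i.
  + move=> f a; rewrite funI_hU; apply: (hU_eq hU Bnd).
    rewrite /eqvU /dU; apply: (ulim_uniq hU) => eps' he'.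
    pose w := tupA a (funI a).
    have := close2 (Dist (@Var R L (farity f)) (@App R L f (fun k => @Var R L k))) w I eps' he'.
    apply: (evS hU) => i /=.
    have e1 : w (farity f) = funI a by rewrite /w tupA_out.
    have e2 : (fun k : 'I_(farity f) => w k) = a by apply: funext => k; rewrite /w tupA_val.
    have e3 : (fun k : 'I_(farity f) => g i (w k)) = (fun k => g i (a k)).
      by apply: funext => k; rewrite /w tupA_val.
    by rewrite e1 e2 e3 dist_refl.
  + move=> r a; rewrite relI_hU; apply: (ulim_uniq hU) => eps' he'.
    have := close2 (@Rel R L r (fun k => @Var R L k)) (tupA a (pt M)) I eps' he'.
    apply: (evS hU) => i /=.
    have e2 : (fun k : 'I_(rarity r) => tupA a (pt M) k) = a by apply: funext => k; rewrite tupA_val.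
    have e3 : (fun k : 'I_(rarity r) => g i (tupA a (pt M) k)) = (fun k => g i (a k)).
      by apply: funext => k; rewrite tupA_val.
    by rewrite e2 e3.
- move=> Phi ys u hq; rewrite fval_hU; apply/ler_addgt0Pr => eps' he'.
  apply: (ulim_le_const hU); first exact: evbnd_fval.
  exact: close.
Qed.

End S1.

Section Final.
Variable R : realType.
Variable L : Lang R.
Variable T : theory L.

Record stage := { stM : Struc L;
  stH : forall c, T'AE T c -> forall v : nat -> stM, fval v c.1 <= fval v c.2 }.

Lemma T'AE_sent c : T'AE T c -> sentence c.1 /\ sentence c.2.
Proof. by case=> [[hs [-> _]] _]; split => // x. Qed.

Lemma stepP (s : stage) : exists p : {N : Struc L & {s' : stage & ((stM s -> N) * (N -> stM s'))%type}},
  [/\ models (projT1 p) T, embedding (projT2 (projT2 p)).1, embedding (projT2 (projT2 p)).2 &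
      elem (fun x => (projT2 (projT2 p)).2 ((projT2 (projT2 p)).1 x))].
Proof.
have [N [e [hN he hex]]] := S1_main (@stH s).
have [M1 [f [j [hf hj hjf]]]] := S2_main he hex.
have hM1 : forall c, T'AE T c -> forall v : nat -> M1, fval v c.1 <= fval v c.2.
  move=> c hc v; have [s1 s2] := T'AE_sent hc.
  pose v0 := fun _ : nat => pt (stM s).
  rewrite (sentence_const v (j \o v0) s1) (sentence_const v (j \o v0) s2) !hj.
  exact: (@stH s).
exists (existT _ N (existT _ (Build_stage hM1) (e, f))); split => //=.
have -> : (fun x => f (e x)) = j by apply: funext => x; rewrite hjf.
exact: hj.
Qed.

Definition step (s : stage) := sval (cid (stepP s)).

Variable M0 : stage.
Local Unset Implicit Arguments.

Fixpoint stg (n : nat) : stage := if n is n'.+1 then projT1 (projT2 (step (stg n'))) else M0.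

Definition Ms n := stM (stg n).
Definition Ns n := projT1 (step (stg n)).
Definition eN n : Ms n -> Ns n := (projT2 (projT2 (step (stg n)))).1.
Definition fN n : Ns n -> Ms n.+1 := (projT2 (projT2 (step (stg n)))).2.

Lemma stepProps n : [/\ models (Ns n) T, embedding (eN n), embedding (fN n) &
      elem (fun x => fN n (eN n x))].
Proof. exact: (svalP (cid (stepP (stg n)))). Qed.

Definition jm n (x : Ms n) : Ms n.+1 := fN n (eN n x).

Lemma jm_emb n : embedding (jm n).
Proof. by case: (stepProps n) => _ h1 h2 _; exact: emb_comp h1 h2. Qed.

Lemma jm_elem n : elem (jm n).
Proof. by case: (stepProps n). Qed.

Definition esN n (y : Ns n) : Ns n.+1 := eN n.+1 (fN n y).

Lemma esN_emb n : embedding (esN n).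
Proof.
by case: (stepProps n) => _ _ h2 _; case: (stepProps n.+1) => _ h1 _ _; exact: emb_comp h2 h1.
Qed.

Definition U := UCS jm_emb.
Definition gs n (x : Ms n) : U := gsC jm_emb x.
Definition gsN n (y : Ns n) : U := gs n.+1 (fN n y).

Lemma gsN_union : is_union esN gsN.
Proof.
have [hemb hc hs] := UCS_union jm_emb.
split.
- move=> n; case: (stepProps n) => _ _ h2 _; exact: emb_comp h2 (hemb n.+1).
- move=> n y; rewrite /gsN /esN /gs.
  by have := hc n.+1 (fN n y).
- move=> z; have [n [x hx]] := hs z; exists n, (eN n x).
  by rewrite /gsN /gs -hx -(hc n x).
Qed.

Lemma final_models : inductive T -> models (Ms 0) T.
Proof.
move=> hind.
have hU : models U T.
  apply: (hind Ns esN esN_emb) gsN_union => n.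
  by case: (stepProps n).
have hel := @elem_union _ _ _ _ _ _ (UCS_union jm_emb) jm_elem 0%N.
move=> c hc v.
rewrite -(hel c.1 v) -(hel c.2 v); exact: hU.
Qed.

End Final.

Theorem mainTheorem5 (R : realType) (L : Lang R) (T : theory L) :
  closed_theory T -> (inductive T <-> AE_theory T).
Proof.
move=> _; split.
- move=> hind; exists (T'AE T); split; first by move=> c [].
  move=> M; split.
    by move=> hM c [_ h] v; exact: h.
  move=> hM.
  exact (@final_models R L T (Build_stage (T := T) (stM := M) hM) hind).
- case=> T' [hAE heq] Ms es hes hMs N gs hu.
  apply/heq => c hc v.
  apply: (AE_union hu (hAE c hc)) => n w.
  by apply: (proj1 (heq (Ms n)) (hMs n)).
Qed.
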